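(* Let $S$ be a functional PTS specification. Let $\Gamma$ be an object context of $\lambda\Pi/S$ whose types are $\lambda\Pi^-/S$ terms, and let $M,A$ be terms containing no $\mathsf{Kind}$-level $\beta$-redex. Then: (1) if $\mathrm{WF}_{\lambda\Pi/S}(\Gamma)$ then $\mathrm{WF}_{\lambda S^*}(\psi(\Gamma))$; (2) if $\Gamma\vdash_{\lambda\Pi/S}M:A$ and $\Gamma\vdash_{\lambda\Pi/S}A:\mathsf{Type}$, then $\psi(\Gamma)\vdash_{\lambda S^*}\varphi(M):\psi(A)$; (3) if $\Gamma\vdash_{\lambda\Pi/S}A:\mathsf{Type}$ then $\psi(\Gamma)\vdash_{\lambda S^*}\psi(A):s$ for some sort $s\in\mathcal S^*$.
   Context: PTS: specification $S=(\mathcal S,\mathcal A,\mathcal R)$ with sorts, axioms $(s_1:s_2)$, rules $(s_1,s_2,s_3)$; functional means $\mathcal A,\mathcal R$ are functional relations; $\lambda S$ has terms $s\mid x\mid M\,N\mid\lambda x:A.M\mid\Pi x:A.B$ and the standard PTS typing rules (axiom rule from $\mathcal A$, product rule from $\mathcal R$, abstraction, application, conversion modulo $\equiv_\beta$). A sort $s$ is a top-sort if there is no $s'$ with $(s:s')\in\mathcal A$. The minimal completion $S^*=(\mathcal S^*,\mathcal A^*,\mathcal R^* )$: $\mathcal S^*=\mathcal S\cup\{\tau\}$ with $\tau\notin\mathcal S$; $\mathcal A^*=\mathcal A\cup\{(s_1:\tau)\mid s_1\in\mathcal S$ a top-sort of $S\}$; $\mathcal R^*=\mathcal R\cup\{(s_1,s_2,\tau)\mid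 s_1,s_2\in\mathcal S^*$, no $s_3$ with $(s_1,s_2,s_3)\in\mathcal R\}$. $\lambda\Pi/S$: the $\lambda\Pi$ calculus (sorts $\mathsf{Type},\mathsf{Kind}$, axiom $\mathsf{Type}:\mathsf{Kind}$, rules $(\mathsf{Type},\mathsf{Type}),(\mathsf{Type},\mathsf{Kind})$) with signature $\Sigma_S$ (variables declared in it may be used in any context) declaring $u_s:\mathsf{Type}$, $\varepsilon_s:u_s\to\mathsf{Type}$ ($s\in\mathcal S$), $\dot s_1:u_{s_2}$ ($(s_1:s_2)\in\mathcal A$), $\dot\pi_{s_1s_2s_3}:\Pi\alpha:u_{s_1}.(\varepsilon_{s_1}\alpha\to u_{s_2})\to u_{s_3}$ ($(s_1,s_2,s_3)\in\mathcal R$), and conversion modulo $\equiv_{\beta R}$, the congruence generated by $\beta$ and the rewrite rules $\varepsilon_{s_2}\dot s_1\leadsto u_{s_1}$, $\varepsilon_{s_3}(\dot\pi_{s_1s_2s_3}AB)\leadsto\Pi x:\varepsilon_{s_1}A.\varepsilon_{s_2}(B\,x)$. A term $P$ of type $C$ in context $\Delta$ is at the level of $\mathsf{Kind}$ if $\Delta\vdash C:\mathsf{Kind}$; a $\mathsf{Kind}$-level $\beta$-redex is a subterm $(\lambda x:B.C)\,P$ at the level of $\mathsf{Kind}$; $\lambda\Pi^-/S$ terms are well-typed $\lambda\Pi/S$ terms with no $\mathsf{Kind}$-level $\beta$-redex. $\Gamma$ is an object context if $\Gamma\vdash_{\lambda\Pi/S}A:\mathsf{Type}$ for every $(x:A)\in\Gamma$;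 for $\Gamma=(x_1:A_1,\dots,x_n:A_n)$, $\psi(\Gamma)=(x_1:\psi(A_1),\dots,x_n:\psi(A_n))$. Inverse translations (partial): $\varphi(\dot s)=s$, $\varphi(\dot\pi_{s_1s_2s_3})=\lambda\alpha:s_1.\lambda\beta:(\alpha\to s_2).\Pi x:\alpha.\beta\,x$, $\varphi(x)=x$, $\varphi(M\,N)=\varphi(M)\varphi(N)$, $\varphi(\lambda x:A.M)=\lambda x:\psi(A).\varphi(M)$; $\psi(u_s)=s$, $\psi(\varepsilon_sM)=\varphi(M)$, $\psi(\Pi x:A.B)=\Pi x:\psi(A).\psi(B)$. *)

(* Defs.v *)
From Stdlib Require Import List Relations PeanoNat.
Import ListNotations.

(* Generic pre-terms over a type K of constants (sorts / signature symbols).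
   Variables are de Bruijn indices; Lam A M = \x:A.M, Pi A B = Pi x:A.B. *)
Inductive term (K : Type) : Type :=
| Cst : K -> term K
| Var : nat -> term K
| App : term K -> term K -> term K
| Lam : term K -> term K -> term K
| Pi  : term K -> term K -> term K.
Arguments Cst {K}. Arguments Var {K}. Arguments App {K}.
Arguments Lam {K}. Arguments Pi {K}.

Fixpoint lift_rec {K} (k n : nat) (t : term K) : term K :=
  match t with
  | Cst c => Cst c
  | Var i => if Nat.leb k i then Var (i + n) else Var i
  | App u v => App (lift_rec k n u) (lift_rec k n v)
  | Lam A M => Lam (lift_rec k n A) (lift_rec (S k) n M)
  | Pi A B => Pi (lift_rec k n A) (lift_rec (S k) n B)
  end.
Definition lift {K} (n : nat) (t : term K) : term K := lift_rec 0 n t.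

Fixpoint subst_rec {K} (N : term K) (k : nat) (t : term K) : term K :=
  match t with
  | Cst c => Cst c
  | Var i => match Nat.compare i k with
             | Lt => Var i
             | Eq => lift k N
             | Gt => Var (pred i)
             end
  | App u v => App (subst_rec N k u) (subst_rec N k v)
  | Lam A M => Lam (subst_rec N k A) (subst_rec N (S k) M)
  | Pi A B => Pi (subst_rec N k A) (subst_rec N (S k) B)
  end.
Definition subst {K} (N t : term K) : term K := subst_rec N 0 t.

Section Reduction.
Variable K : Type.
Variable hd : term K -> term K -> Prop.

Inductive step : term K -> term K -> Prop :=
| st_beta A M N : step (App (Lam A M) N) (subst N M)
| st_head t u : hd t u -> step t u
| st_appl u u' v : step u u' -> step (App u v) (App u' v)
| st_appr u v v' : step v v' -> step (App u v) (App u v')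
| st_laml A A' M : step A A' -> step (Lam A M) (Lam A' M)
| st_lamr A M M' : step M M' -> step (Lam A M) (Lam A M')
| st_pil A A' B : step A A' -> step (Pi A B) (Pi A' B)
| st_pir A B B' : step B B' -> step (Pi A B) (Pi A B').

Definition conv : term K -> term K -> Prop := clos_refl_sym_trans (term K) step.
End Reduction.

(* Generic typing: a PTS (sorts [IsSort], axioms [Ax], rules [Rl]) extended
   with a signature [Sig] (constant c has closed type T) and conversion
   modulo beta + [hd].  [wf G] is well-formedness of contexts; the head of
   a context list is the most recently declared variable. *)
Section Typing.
Variable K : Type.
Variable IsSort : K -> Prop.
Variable Ax : K -> K -> Prop.
Variable Rl : K -> K -> K -> Prop.
Variable Sig : K -> term K -> Prop.
Variable hd : term K -> term K -> Prop.

Inductive wf : list (term K) -> Prop :=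
| wf_nil : wf []
| wf_cons G A s : IsSort s -> typ G A (Cst s) -> wf (A :: G)
with typ : list (term K) -> term K -> term K -> Prop :=
| t_sort G s1 s2 : wf G -> Ax s1 s2 -> typ G (Cst s1) (Cst s2)
| t_sig G c T : wf G -> Sig c T -> typ G (Cst c) T
| t_var G n A : wf G -> nth_error G n = Some A -> typ G (Var n) (lift (S n) A)
| t_pi G A B s1 s2 s3 :
    Rl s1 s2 s3 -> typ G A (Cst s1) -> typ (A :: G) B (Cst s2) ->
    typ G (Pi A B) (Cst s3)
| t_lam G A M B s :
    IsSort s -> typ (A :: G) M B -> typ G (Pi A B) (Cst s) ->
    typ G (Lam A M) (Pi A B)
| t_app G M N A B :
    typ G M (Pi A B) -> typ G N A -> typ G (App M N) (subst N B)
| t_conv G M A B s :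
    typ G M A -> IsSort s -> typ G B (Cst s) -> conv K hd A B -> typ G M B.
End Typing.

Definition functional_spec {Srt : Type} (Ax : Srt -> Srt -> Prop)
  (Rl : Srt -> Srt -> Srt -> Prop) : Prop :=
  (forall s s1 s2, Ax s s1 -> Ax s s2 -> s1 = s2) /\
  (forall s1 s2 s3 s3', Rl s1 s2 s3 -> Rl s1 s2 s3' -> s3 = s3').

Definition top_sort {Srt : Type} (Ax : Srt -> Srt -> Prop) (s : Srt) : Prop :=
  ~ exists s', Ax s s'.

(* Minimal completion S^*: sorts [option Srt], with [None] = tau. *)
Definition starAx {Srt : Type} (Ax : Srt -> Srt -> Prop)
  (a b : option Srt) : Prop :=
  match a, b with
  | Some s1, Some s2 => Ax s1 s2
  | Some s1, None => top_sort Ax s1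
  | None, _ => False
  end.

Definition starRl {Srt : Type} (Rl : Srt -> Srt -> Srt -> Prop)
  (a b c : option Srt) : Prop :=
  match c with
  | Some s3 => exists s1 s2, a = Some s1 /\ b = Some s2 /\ Rl s1 s2 s3
  | None => ~ exists s1 s2 s3, a = Some s1 /\ b = Some s2 /\ Rl s1 s2 s3
  end.

Definition typStar {Srt : Type} (Ax : Srt -> Srt -> Prop)
  (Rl : Srt -> Srt -> Srt -> Prop) :
  list (term (option Srt)) -> term (option Srt) -> term (option Srt) -> Prop :=
  typ (option Srt) (fun _ => True) (starAx Ax) (starRl Rl)
      (fun (_ : option Srt) (_ : term (option Srt)) => False)
      (fun _ _ => False).

Definition wfStar {Srt : Type} (Ax : Srt -> Srt -> Prop)
  (Rl : Srt -> Srt -> Srt -> Prop) : list (term (option Srt)) -> Prop :=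
  wf (option Srt) (fun _ => True) (starAx Ax) (starRl Rl)
     (fun (_ : option Srt) (_ : term (option Srt)) => False)
     (fun _ _ => False).

Inductive LPC (Srt : Type) : Type :=
| cType : LPC Srt
| cKind : LPC Srt
| cU : Srt -> LPC Srt
| cEps : Srt -> LPC Srt
| cDot : Srt -> LPC Srt
| cPi : Srt -> Srt -> Srt -> LPC Srt.
Arguments cType {Srt}. Arguments cKind {Srt}. Arguments cU {Srt}.
Arguments cEps {Srt}. Arguments cDot {Srt}. Arguments cPi {Srt}.

Definition LP_isSort {Srt : Type} (c : LPC Srt) : Prop := c = cType \/ c = cKind.
Definition LP_ax {Srt : Type} (c1 c2 : LPC Srt) : Prop := c1 = cType /\ c2 = cKind.
Definition LP_rl {Srt : Type} (c1 c2 c3 : LPC Srt) : Prop :=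
  (c1 = cType /\ c2 = cType /\ c3 = cType) \/
  (c1 = cType /\ c2 = cKind /\ c3 = cKind).

Definition LP_sig {Srt : Type} (Ax : Srt -> Srt -> Prop)
  (Rl : Srt -> Srt -> Srt -> Prop) (c : LPC Srt) (T : term (LPC Srt)) : Prop :=
  match c with
  | cU s => T = Cst cType
  | cEps s => T = Pi (Cst (cU s)) (Cst cType)
  | cDot s1 => exists s2, Ax s1 s2 /\ T = Cst (cU s2)
  | cPi s1 s2 s3 =>
      Rl s1 s2 s3 /\
      T = Pi (Cst (cU s1))
             (Pi (Pi (App (Cst (cEps s1)) (Var 0)) (Cst (cU s2)))
                 (Cst (cU s3)))
  | _ => False
  end.

Inductive LP_hd {Srt : Type} (Ax : Srt -> Srt -> Prop)
  (Rl : Srt -> Srt -> Srt -> Prop) : term (LPC Srt) -> term (LPC Srt) -> Prop :=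
| hd_ax s1 s2 : Ax s1 s2 ->
    LP_hd Ax Rl (App (Cst (cEps s2)) (Cst (cDot s1))) (Cst (cU s1))
| hd_rl s1 s2 s3 A B : Rl s1 s2 s3 ->
    LP_hd Ax Rl (App (Cst (cEps s3)) (App (App (Cst (cPi s1 s2 s3)) A) B))
          (Pi (App (Cst (cEps s1)) A)
              (App (Cst (cEps s2)) (App (lift 1 B) (Var 0)))).

Definition typLP {Srt : Type} (Ax : Srt -> Srt -> Prop)
  (Rl : Srt -> Srt -> Srt -> Prop) :
  list (term (LPC Srt)) -> term (LPC Srt) -> term (LPC Srt) -> Prop :=
  typ (LPC Srt) LP_isSort LP_ax LP_rl (LP_sig Ax Rl) (LP_hd Ax Rl).

Definition wfLP {Srt : Type} (Ax : Srt -> Srt -> Prop)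
  (Rl : Srt -> Srt -> Srt -> Prop) : list (term (LPC Srt)) -> Prop :=
  wf (LPC Srt) LP_isSort LP_ax LP_rl (LP_sig Ax Rl) (LP_hd Ax Rl).

(* Object context: G |- A : Type for every (x : A) in G (the declared type,
   read in G, is lifted past the later declarations). *)
Definition object_ctx {Srt : Type} (Ax : Srt -> Srt -> Prop)
  (Rl : Srt -> Srt -> Srt -> Prop) (G : list (term (LPC Srt))) : Prop :=
  forall n A, nth_error G n = Some A -> typLP Ax Rl G (lift (S n) A) (Cst cType).

(* sub_at G t D u : u occurs in t (t read in context G) at a position whose
   local context is D. *)
Inductive sub_at {K : Type} : list (term K) -> term K -> list (term K) -> term K -> Prop :=
| sa_here G t : sub_at G t G t
| sa_appl G u v D w : sub_at G u D w -> sub_at G (App u v) D w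
| sa_appr G u v D w : sub_at G v D w -> sub_at G (App u v) D w
| sa_laml G A M D w : sub_at G A D w -> sub_at G (Lam A M) D w
| sa_lamr G A M D w : sub_at (A :: G) M D w -> sub_at G (Lam A M) D w
| sa_pil G A B D w : sub_at G A D w -> sub_at G (Pi A B) D w
| sa_pir G A B D w : sub_at (A :: G) B D w -> sub_at G (Pi A B) D w.

Definition NoKindRedex {Srt : Type} (Ax : Srt -> Srt -> Prop)
  (Rl : Srt -> Srt -> Srt -> Prop) (G : list (term (LPC Srt)))
  (t : term (LPC Srt)) : Prop :=
  ~ exists D B C P T,
      sub_at G t D (App (Lam B C) P) /\
      typLP Ax Rl D (App (Lam B C) P) T /\
      typLP Ax Rl D T (Cst cKind).

Definition LPminus {Srt : Type} (Ax : Srt -> Srt -> Prop)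
  (Rl : Srt -> Srt -> Srt -> Prop) (G : list (term (LPC Srt)))
  (t : term (LPC Srt)) : Prop :=
  (exists T, typLP Ax Rl G t T) /\ NoKindRedex Ax Rl G t.

Fixpoint phi {Srt : Type} (t : term (LPC Srt)) : option (term (option Srt)) :=
  match t with
  | Cst (cDot s) => Some (Cst (Some s))
  | Cst (cPi s1 s2 s3) =>
      (* \alpha:s1. \beta:(alpha -> s2). Pi x:alpha. beta x *)
      Some (Lam (Cst (Some s1))
              (Lam (Pi (Var 0) (Cst (Some s2)))
                   (Pi (Var 1) (App (Var 1) (Var 0)))))
  | Var n => Some (Var n)
  | App M N =>
      match phi M, phi N with
      | Some a, Some b => Some (App a b)
      | _, _ => None
      end
  | Lam A M =>
      match psi A, phi M with
      | Some a, Some m => Some (Lam a m)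
      | _, _ => None
      end
  | _ => None
  end
with psi {Srt : Type} (t : term (LPC Srt)) : option (term (option Srt)) :=
  match t with
  | Cst (cU s) => Some (Cst (Some s))
  | App (Cst (cEps s)) M => phi M
  | Pi A B =>
      match psi A, psi B with
      | Some a, Some b => Some (Pi a b)
      | _, _ => None
      end
  | _ => None
  end.

Fixpoint psi_ctx {Srt : Type} (G : list (term (LPC Srt))) :
  option (list (term (option Srt))) :=
  match G with
  | [] => Some []
  | A :: G' =>
      match psi A, psi_ctx G' with
      | Some a, Some g => Some (a :: g)
      | _, _ => None
      end
  end.

(* Main.v *)
Require Import Defs.
From Stdlib Require Import List Relations PeanoNat Lia Classical ClassicalEpsilon.
Import ListNotations.

Ltac dbcase := repeat match goal with
 | |- context [Nat.leb ?a ?b] => destruct (Nat.leb_spec a b)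
 | |- context [Nat.compare ?a ?b] => destruct (Nat.compare_spec a b)
 end.


Arguments Nat.leb : simpl never.
Arguments Nat.compare : simpl never.
Section DB.
Context {K : Type}.
Notation tm := (term K).

Lemma lift_rec0 : forall (t : tm) k, lift_rec k 0 t = t.
Proof. induction t; intros; simpl; try (f_equal; auto; fail).
  dbcase; f_equal; lia. Qed.

Lemma lift0 : forall (t : tm), lift 0 t = t.
Proof. intros; apply lift_rec0. Qed.

Lemma simpl_lift_rec : forall (t : tm) n k p i, n <= k -> k <= n + i ->
  lift_rec k p (lift_rec n i t) = lift_rec n (p + i) t.
Proof. induction t; intros; simpl; try (f_equal; auto with arith; fail).
  - dbcase; simpl; dbcase; f_equal; lia.
  - f_equal; auto. apply IHt2; lia.
  - f_equal; auto. apply IHt2; lia.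
Qed.

Lemma permute_lift_rec : forall (t : tm) k i p n, k <= i ->
  lift_rec k p (lift_rec i n t) = lift_rec (p + i) n (lift_rec k p t).
Proof. induction t; intros; simpl; try (f_equal; auto; fail).
  - dbcase; simpl; dbcase; f_equal; lia.
  - f_equal; auto. rewrite IHt2 by lia. f_equal; lia.
  - f_equal; auto. rewrite IHt2 by lia. f_equal; lia.
Qed.

Lemma simpl_subst_rec : forall (t : tm) N n p k, k <= p -> p <= n + k ->
  subst_rec N p (lift_rec k (S n) t) = lift_rec k n t.
Proof. induction t; intros; simpl; try (f_equal; auto; fail).
  - dbcase; simpl; dbcase; f_equal; lia.
  - f_equal; auto. apply IHt2; lia.
  - f_equal; auto. apply IHt2; lia.
Qed.

Lemma commut_lift_subst_rec : forall (t : tm) N k p n, k <= p ->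
  lift_rec k n (subst_rec N p t) = subst_rec N (n + p) (lift_rec k n t).
Proof. induction t; intros; simpl; try (f_equal; auto; fail).
  - dbcase; simpl; dbcase; try (f_equal; lia).
    unfold lift. rewrite simpl_lift_rec by lia. f_equal; lia.
  - f_equal; auto. rewrite IHt2 by lia. f_equal; lia.
  - f_equal; auto. rewrite IHt2 by lia. f_equal; lia.
Qed.

Lemma commut_lift_subst_rec2 : forall (t : tm) N k p n,
  lift_rec (p + k) n (subst_rec N p t) = subst_rec (lift_rec k n N) p (lift_rec (S (p + k)) n t).
Proof. induction t; intros; simpl; try (f_equal; auto; fail).
  - dbcase; simpl; dbcase; try (f_equal; lia).
    subst. unfold lift. rewrite (permute_lift_rec _ 0 k p) by lia. f_equal; lia.
  - f_equal; auto. specialize (IHt2 N k (S p) n). simpl in IHt2. auto.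
  - f_equal; auto. specialize (IHt2 N k (S p) n). simpl in IHt2. auto.
Qed.

Lemma distr_subst_rec : forall (t : tm) N P n p,
  subst_rec P (p + n) (subst_rec N p t) = subst_rec (subst_rec P n N) p (subst_rec P (S (p + n)) t).
Proof. induction t; intros; simpl; try (f_equal; auto; fail).
  - dbcase; simpl; dbcase; try (f_equal; lia); subst; unfold lift.
    + rewrite (commut_lift_subst_rec _ _ 0) by lia. reflexivity.
    + rewrite simpl_subst_rec by lia. reflexivity.
  - f_equal; auto. specialize (IHt2 N P n (S p)). simpl in IHt2. auto.
  - f_equal; auto. specialize (IHt2 N P n (S p)). simpl in IHt2. auto.
Qed.

Lemma lift_lift_rec : forall (t : tm) k n m, lift_rec k n (lift_rec k m t) = lift_rec k (n + m) t.
Proof. intros; apply simpl_lift_rec; lia. Qed.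

Lemma subst_lift_cancel : forall (t : tm) N k, subst_rec N k (lift_rec k 1 t) = t.
Proof. intros. rewrite simpl_subst_rec by lia. apply lift_rec0. Qed.

End DB.

Section Red.
Context {K : Type}.
Variable hd : term K -> term K -> Prop.
Hypothesis Hhd_lift : forall t u k n, hd t u -> hd (lift_rec k n t) (lift_rec k n u).
Hypothesis Hhd_subst : forall t u N k, hd t u -> hd (subst_rec N k t) (subst_rec N k u).
Notation step := (step K hd).
Notation conv := (conv K hd).

Lemma conv_map : forall (f : term K -> term K),
  (forall x y, step x y -> step (f x) (f y)) -> forall x y, conv x y -> conv (f x) (f y).
Proof. intros f Hf x y H. induction H.
  - apply rst_step; auto.
  - apply rst_refl.
  - apply rst_sym; auto.
  - eapply rst_trans; eauto. Qed.

Lemma conv_refl : forall x, conv x x. Proof. intros; apply rst_refl. Qed.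
Lemma conv_sym : forall x y, conv x y -> conv y x. Proof. intros; apply rst_sym; auto. Qed.
Lemma conv_trans : forall x y z, conv x y -> conv y z -> conv x z.
Proof. intros; eapply rst_trans; eauto. Qed.
Lemma conv_step : forall x y, step x y -> conv x y. Proof. intros; apply rst_step; auto. Qed.

Lemma conv_app : forall u u' v v', conv u u' -> conv v v' -> conv (App u v) (App u' v').
Proof. intros. apply conv_trans with (App u' v).
  - apply (conv_map (fun x => App x v)); auto. intros; apply st_appl; auto.
  - apply (conv_map (fun x => App u' x)); auto. intros; apply st_appr; auto. Qed.
Lemma conv_lam : forall u u' v v', conv u u' -> conv v v' -> conv (Lam u v) (Lam u' v').
Proof. intros. apply conv_trans with (Lam u' v).
  - apply (conv_map (fun x => Lam x v)); auto. intros; apply st_laml; auto.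
  - apply (conv_map (fun x => Lam u' x)); auto. intros; apply st_lamr; auto. Qed.
Lemma conv_pi : forall u u' v v', conv u u' -> conv v v' -> conv (Pi u v) (Pi u' v').
Proof. intros. apply conv_trans with (Pi u' v).
  - apply (conv_map (fun x => Pi x v)); auto. intros; apply st_pil; auto.
  - apply (conv_map (fun x => Pi u' x)); auto. intros; apply st_pir; auto. Qed.

Lemma step_lift : forall t u, step t u -> forall k n, step (lift_rec k n t) (lift_rec k n u).
Proof. induction 1; intros; simpl.
  - unfold subst. rewrite (commut_lift_subst_rec2 _ _ k 0). apply st_beta.
  - apply st_head; auto.
  - apply st_appl; auto.
  - apply st_appr; auto.
  - apply st_laml; auto.
  - apply st_lamr; auto.
  - apply st_pil; auto.
  - apply st_pir; auto.
Qed.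

Lemma step_subst : forall t u, step t u -> forall N k, step (subst_rec N k t) (subst_rec N k u).
Proof. induction 1; intros; simpl.
  - unfold subst. rewrite (distr_subst_rec _ _ _ k 0). apply st_beta.
  - apply st_head; auto.
  - apply st_appl; auto.
  - apply st_appr; auto.
  - apply st_laml; auto.
  - apply st_lamr; auto.
  - apply st_pil; auto.
  - apply st_pir; auto.
Qed.

Lemma conv_lift : forall t u k n, conv t u -> conv (lift_rec k n t) (lift_rec k n u).
Proof. intros. apply (conv_map (fun x => lift_rec k n x)); auto. intros; apply step_lift; auto. Qed.

Lemma conv_subst1 : forall t u N k, conv t u -> conv (subst_rec N k t) (subst_rec N k u).
Proof. intros. apply (conv_map (fun x => subst_rec N k x)); auto. intros; apply step_subst; auto. Qed.

Lemma conv_subst2 : forall t N N' k, conv N N' -> conv (subst_rec N k t) (subst_rec N' k t).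
Proof. induction t; intros; simpl.
  - apply conv_refl.
  - destruct (Nat.compare n k); try apply conv_refl. apply conv_lift; auto.
  - apply conv_app; auto.
  - apply conv_lam; auto.
  - apply conv_pi; auto. Qed.

Lemma conv_subst : forall t t' N N' k, conv t t' -> conv N N' ->
  conv (subst_rec N k t) (subst_rec N' k t').
Proof. intros. eapply conv_trans. apply conv_subst1; eauto. apply conv_subst2; auto. Qed.

End Red.

Scheme typ_mind := Minimality for typ Sort Prop with wf_mind := Minimality for wf Sort Prop.

Inductive ins_in_env {K : Type} (A : term K) : nat -> list (term K) -> list (term K) -> Prop :=
| ins_O e : ins_in_env A 0 e (A :: e)
| ins_S n e f t : ins_in_env A n e f -> ins_in_env A (S n) (t :: e) (lift_rec n 1 t :: f).

Inductive sub_in_env {K : Type} (g : list (term K)) (N T : term K) : nat -> list (term K) -> list (term K) -> Prop :=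
| sub_O : sub_in_env g N T 0 (T :: g) g
| sub_S e f n u : sub_in_env g N T n e f -> sub_in_env g N T (S n) (u :: e) (subst_rec N n u :: f).

Section Typ.
Context {K : Type}.
Variables (IsSort : K -> Prop) (Ax : K -> K -> Prop) (Rl : K -> K -> K -> Prop)
  (Sig : K -> term K -> Prop) (hd : term K -> term K -> Prop).
Hypothesis Hhd_lift : forall t u k n, hd t u -> hd (lift_rec k n t) (lift_rec k n u).
Hypothesis Hhd_subst : forall t u N k, hd t u -> hd (subst_rec N k t) (subst_rec N k u).
Hypothesis Hsig_lift : forall c T k n, Sig c T -> lift_rec k n T = T.
Hypothesis Hsig_subst : forall c T N k, Sig c T -> subst_rec N k T = T.
Hypothesis Hrl_sort : forall s1 s2 s3, Rl s1 s2 s3 -> IsSort s1.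

Notation typ := (typ K IsSort Ax Rl Sig hd).
Notation wf := (wf K IsSort Ax Rl Sig hd).
Notation conv := (conv K hd).

Lemma typ_wf : forall G M T, typ G M T -> wf G.
Proof. induction 1; auto. Qed.

Lemma wf_inv : forall G A, wf (A :: G) -> exists s, IsSort s /\ typ G A (Cst s).
Proof. intros. inversion H; subst; eauto. Qed.

Lemma gen_pi : forall G A B T, typ G (Pi A B) T -> exists s1 s2 s3, Rl s1 s2 s3 /\
  typ G A (Cst s1) /\ typ (A :: G) B (Cst s2) /\ conv (Cst s3) T.
Proof. intros G A B T H. remember (Pi A B) as P. revert A B HeqP.
  induction H; intros; try discriminate.
  - injection HeqP; intros; subst. exists s1, s2, s3. repeat split; auto. apply conv_refl.
  - destruct (IHtyp1 _ _ HeqP) as (s1 & s2 & s3 & ? & ? & ? & ?).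
    exists s1, s2, s3. repeat split; auto. eapply conv_trans; eauto.
Qed.

Lemma ins_nth_lt : forall (A : term K) k e f, ins_in_env A k e f -> forall n B, n < k ->
  nth_error e n = Some B -> nth_error f n = Some (lift_rec (k - S n) 1 B).
Proof. induction 1; intros. lia. destruct n0; simpl in *.
  - injection H1; intros; subst. f_equal. f_equal. lia.
  - apply IHins_in_env; auto. lia. Qed.

Lemma ins_nth_ge : forall (A : term K) k e f, ins_in_env A k e f -> forall n B, k <= n ->
  nth_error e n = Some B -> nth_error f (S n) = Some B.
Proof. induction 1; intros; simpl; auto. destruct n0. lia. simpl in *. apply IHins_in_env; auto. lia. Qed.

Lemma weakening_gen : forall G M T, typ G M T -> forall A k G', ins_in_env A k G G' -> wf G' ->
  typ G' (lift_rec k 1 M) (lift_rec k 1 T).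
Proof.
  apply (typ_mind K IsSort Ax Rl Sig hd
    (fun G M T => forall A k G', ins_in_env A k G G' -> wf G' -> typ G' (lift_rec k 1 M) (lift_rec k 1 T))
    (fun G => True)); intros; auto.
  - simpl. apply t_sort; auto.
  - simpl. rewrite (Hsig_lift _ _ k 1 H1). apply t_sig; auto.
  - simpl. destruct (Nat.leb_spec k n).
    + unfold lift. rewrite simpl_lift_rec by lia.
      replace (1 + S n) with (S (n + 1)) by lia. apply t_var; auto.
      replace (n + 1) with (S n) by lia. eapply ins_nth_ge; eauto.
    + unfold lift. replace k with (S n + (k - S n)) by lia.
      rewrite <- permute_lift_rec by lia. replace (S n + (k - S n)) with k by lia.
      apply t_var; auto. eapply ins_nth_lt; eauto.
  - simpl. assert (typ G' (lift_rec k 1 A) (Cst s1)) by (apply (H1 A0); auto).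
    eapply t_pi; eauto. apply (H3 A0). constructor; auto. eapply wf_cons; eauto.
  - simpl. assert (HP : typ G' (Pi (lift_rec k 1 A) (lift_rec (S k) 1 B)) (Cst s)).
    { apply (H3 A0 k G'); auto. }
    destruct (gen_pi _ _ _ _ HP) as (s1 & s2 & s3 & Hr & HA & _ & _).
    eapply t_lam with (s := s); [exact H | apply (H1 A0); [constructor; auto | eapply wf_cons with (s := s1); eauto] | exact HP].
  - simpl. unfold subst. rewrite (commut_lift_subst_rec2 _ _ k 0).
    eapply t_app. apply (H0 A0); eauto. simpl. apply (H2 A0); eauto.
  - eapply t_conv with (s := s); [eauto | exact H1 | apply (H3 A0 k G'); auto | apply conv_lift; auto].
Qed.

Lemma weakening : forall G M T A, typ G M T -> wf (A :: G) -> typ (A :: G) (lift 1 M) (lift 1 T).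
Proof. intros. eapply weakening_gen; eauto. constructor. Qed.

Lemma thinning : forall D G M T, typ G M T -> wf (D ++ G) ->
  typ (D ++ G) (lift (length D) M) (lift (length D) T).
Proof. induction D; intros; simpl.
  - rewrite !lift0. auto.
  - simpl in H0. assert (wf (D ++ G)) by (destruct (wf_inv _ _ H0) as (? & ? & ?); eapply typ_wf; eauto).
    specialize (IHD _ _ _ H H1). pose proof (weakening _ _ _ _ IHD H0).
    unfold lift in *. rewrite !lift_lift_rec in H2. auto.
Qed.

Lemma sub_nth_lt : forall g (N T : term K) n e f, sub_in_env g N T n e f -> forall i B, i < n ->
  nth_error e i = Some B -> nth_error f i = Some (subst_rec N (n - S i) B).
Proof. induction 1; intros. lia. destruct i; simpl in *.
  - injection H1; intros; subst. f_equal. f_equal. lia.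
  - apply IHsub_in_env; auto. lia. Qed.

Lemma sub_nth_eq : forall g (N T : term K) n e f, sub_in_env g N T n e f -> nth_error e n = Some T.
Proof. induction 1; simpl; auto. Qed.

Lemma sub_nth_gt : forall g (N T : term K) n e f, sub_in_env g N T n e f -> forall i B, n < i ->
  nth_error e i = Some B -> nth_error f (pred i) = Some B.
Proof. induction 1; intros.
  - destruct i. lia. simpl in *. auto.
  - destruct i. lia. simpl in *. destruct i. lia. simpl. 
    specialize (IHsub_in_env (S i) B). simpl in IHsub_in_env. apply IHsub_in_env; auto. lia. Qed.

Lemma sub_split : forall g (N T : term K) n e f, sub_in_env g N T n e f -> exists D, f = D ++ g /\ length D = n.
Proof. induction 1. exists []; auto. destruct IHsub_in_env as (D & -> & <-).
  exists (subst_rec N (length D) u :: D). auto. Qed.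

Lemma substitution_gen : forall e M A, typ e M A -> forall g N T n f, typ g N T ->
  sub_in_env g N T n e f -> typ f (subst_rec N n M) (subst_rec N n A).
Proof.
  apply (typ_mind K IsSort Ax Rl Sig hd
    (fun e M A => forall g N T n f, typ g N T -> sub_in_env g N T n e f -> typ f (subst_rec N n M) (subst_rec N n A))
    (fun e => forall g N T n f, typ g N T -> sub_in_env g N T n e f -> wf f)); intros.
  - simpl. apply t_sort; eauto.
  - simpl. rewrite (Hsig_subst _ _ N n H1). apply t_sig; eauto.
  - simpl. assert (Hwf : wf f) by eauto. destruct (Nat.compare_spec n n0).
    + subst. rewrite (sub_nth_eq _ _ _ _ _ _ H3) in H1. injection H1; intros; subst.
      unfold lift. rewrite simpl_subst_rec by lia.
      destruct (sub_split _ _ _ _ _ _ H3) as (D & -> & <-). apply thinning; auto.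
    + unfold lift. assert (E : subst_rec N n0 (lift_rec 0 (S n) A) = lift_rec 0 (S n) (subst_rec N (n0 - S n) A)).
      { rewrite commut_lift_subst_rec by lia. f_equal. lia. }
      rewrite E. apply t_var; auto. eapply sub_nth_lt; eauto.
    + unfold lift. rewrite simpl_subst_rec by lia.
      replace n with (S (pred n)) at 2 by lia. apply t_var; auto. eapply sub_nth_gt; eauto.
  - simpl. eapply t_pi; [exact H | eapply H1; eauto | eapply H3; [eauto | constructor; eauto]].
  - simpl. eapply t_lam with (s:=s); [exact H | eapply H1; [exact H4 | constructor; exact H5] |
    specialize (H3 _ _ _ _ _ H4 H5); simpl in H3; exact H3].
  - simpl. unfold subst. rewrite (distr_subst_rec _ _ _ n 0).
    eapply t_app. specialize (H0 _ _ _ _ _ H3 H4). simpl in H0. exact H0. eauto.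
  - eapply t_conv with (s:=s); [eauto | exact H1 | specialize (H3 _ _ _ _ _ H5 H6); simpl in H3; exact H3 |
    apply conv_subst1; auto].
  - inversion H0.
  - match goal with Hs : sub_in_env _ _ _ _ (_ :: _) _ |- _ => inversion Hs; subst end.
    + eapply typ_wf; eassumption.
    + eapply wf_cons with (s := s); [assumption | ].
      match goal with Hs : sub_in_env _ _ _ _ G _, Ht : typ _ _ _ |- _ => specialize (H1 _ _ _ _ _ Ht Hs) end.
      simpl in H1; exact H1.
Qed.

Lemma substitution : forall G A M B N, typ (A :: G) M B -> typ G N A ->
  typ G (subst N M) (subst N B).
Proof. intros. eapply substitution_gen; eauto. constructor. Qed.

End Typ.

Definition decP (P : Prop) : {P} + {~ P} := excluded_middle_informative P.

Section LPConf.
Context {Srt : Type}.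
Variables (Ax : Srt -> Srt -> Prop) (Rl : Srt -> Srt -> Srt -> Prop).
Notation tm := (term (LPC Srt)).
Notation hd := (LP_hd Ax Rl).
Notation step := (step (LPC Srt) hd).
Notation conv := (conv (LPC Srt) hd).
Definition red := clos_refl_trans tm step.

Lemma hd_lift : forall t u k n, hd t u -> hd (lift_rec k n t) (lift_rec k n u).
Proof. intros. destruct H; simpl.
  - constructor; auto.
  - assert (E : lift_rec (S k) n (lift 1 B) = lift 1 (lift_rec k n B)).
    { unfold lift. rewrite (permute_lift_rec B 0 k 1 n) by lia. reflexivity. }
    rewrite E. change (lift_rec (S k) n (Var 0)) with (Var (LPC Srt) 0). constructor; auto. Qed.

Lemma lift_1_subst : forall (B N : tm) k, subst_rec N (S k) (lift 1 B) = lift 1 (subst_rec N k B).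
Proof. intros. unfold lift. rewrite (commut_lift_subst_rec B N 0 k 1) by lia. reflexivity. Qed.
Lemma lift_1_lift : forall (B : tm) k n, lift_rec (S k) n (lift 1 B) = lift 1 (lift_rec k n B).
Proof. intros. unfold lift. rewrite (permute_lift_rec B 0 k 1 n) by lia. reflexivity. Qed.

Lemma hd_subst : forall t u N k, hd t u -> hd (subst_rec N k t) (subst_rec N k u).
Proof. intros. destruct H; simpl.
  - constructor; auto.
  - rewrite lift_1_subst. change (subst_rec N (S k) (Var 0)) with (Var (LPC Srt) 0). constructor; auto. Qed.

Inductive par : tm -> tm -> Prop :=
| par_var n : par (Var n) (Var n)
| par_cst c : par (Cst c) (Cst c)
| par_app u u' v v' : par u u' -> par v v' -> par (App u v) (App u' v')
| par_lam u u' v v' : par u u' -> par v v' -> par (Lam u v) (Lam u' v')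
| par_pi u u' v v' : par u u' -> par v v' -> par (Pi u v) (Pi u' v')
| par_beta A M M' N N' : par M M' -> par N N' -> par (App (Lam A M) N) (subst N' M')
| par_ax s1 s2 : Ax s1 s2 -> par (App (Cst (cEps s2)) (Cst (cDot s1))) (Cst (cU s1))
| par_rl s1 s2 s3 A A' B B' : Rl s1 s2 s3 -> par A A' -> par B B' ->
    par (App (Cst (cEps s3)) (App (App (Cst (cPi s1 s2 s3)) A) B))
        (Pi (App (Cst (cEps s1)) A') (App (Cst (cEps s2)) (App (lift 1 B') (Var 0)))).

Lemma par_refl : forall t, par t t.
Proof. induction t; constructor; auto. Qed.

Lemma step_par : forall t u, step t u -> par t u.
Proof. induction 1.
  - apply par_beta; apply par_refl.
  - destruct H. apply par_ax; auto. apply par_rl; auto using par_refl.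
  - apply par_app; auto using par_refl.
  - apply par_app; auto using par_refl.
  - apply par_lam; auto using par_refl.
  - apply par_lam; auto using par_refl.
  - apply par_pi; auto using par_refl.
  - apply par_pi; auto using par_refl. Qed.

Lemma red_app : forall u u' v v', red u u' -> red v v' -> red (App u v) (App u' v').
Proof. intros. apply rt_trans with (App u' v).
  - induction H. apply rt_step; apply st_appl; auto. apply rt_refl. eapply rt_trans; eauto.
  - induction H0. apply rt_step; apply st_appr; auto. apply rt_refl. eapply rt_trans; eauto. Qed.
Lemma red_lam : forall u u' v v', red u u' -> red v v' -> red (Lam u v) (Lam u' v').
Proof. intros. apply rt_trans with (Lam u' v).
  - induction H. apply rt_step; apply st_laml; auto. apply rt_refl. eapply rt_trans; eauto.
  - induction H0. apply rt_step; apply st_lamr; auto. apply rt_refl. eapply rt_trans; eauto. Qed.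
Lemma red_pi : forall u u' v v', red u u' -> red v v' -> red (Pi u v) (Pi u' v').
Proof. intros. apply rt_trans with (Pi u' v).
  - induction H. apply rt_step; apply st_pil; auto. apply rt_refl. eapply rt_trans; eauto.
  - induction H0. apply rt_step; apply st_pir; auto. apply rt_refl. eapply rt_trans; eauto. Qed.

Lemma red_lift : forall t u k n, red t u -> red (lift_rec k n t) (lift_rec k n u).
Proof. induction 1. apply rt_step. apply step_lift; auto. apply hd_lift. apply rt_refl.
  eapply rt_trans; eauto. Qed.

Lemma par_red : forall t u, par t u -> red t u.
Proof. induction 1; try (apply rt_refl).
  - apply red_app; auto.
  - apply red_lam; auto.
  - apply red_pi; auto.
  - apply rt_trans with (App (Lam A M') N'). apply red_app; auto. apply red_lam; auto. apply rt_refl.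
    apply rt_step; apply st_beta.
  - apply rt_step; apply st_head; constructor; auto.
  - eapply rt_trans. apply red_app. apply rt_refl. apply red_app. apply red_app. apply rt_refl.
    eauto. eauto. apply rt_step; apply st_head; constructor; auto.
Qed.

Lemma par_lift : forall t u, par t u -> forall k n, par (lift_rec k n t) (lift_rec k n u).
Proof. induction 1; intros; simpl; try (constructor; auto; fail).
  - destruct (Nat.leb k n); constructor.
  - unfold subst. rewrite (commut_lift_subst_rec2 _ _ k 0). apply par_beta; auto.
  - rewrite lift_1_lift. change (lift_rec (S k) n (Var 0)) with (Var (LPC Srt) 0). apply par_rl; auto.
Qed.

Lemma par_subst : forall t u, par t u -> forall N N' k, par N N' ->
  par (subst_rec N k t) (subst_rec N' k u).
Proof. induction 1; intros; simpl; try (constructor; auto; fail).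
  - destruct (Nat.compare n k); try constructor. apply par_lift; auto.
  - unfold subst. rewrite (distr_subst_rec _ _ _ k 0). apply par_beta; auto.
  - rewrite lift_1_subst. change (subst_rec N' (S k) (Var 0)) with (Var (LPC Srt) 0). apply par_rl; auto.
Qed.

Fixpoint rho (t : tm) : tm :=
  match t with
  | App u v =>
    match u with
    | Lam A M => subst (rho v) (rho M)
    | Cst (cEps s2) =>
      match v with
      | Cst (cDot s1) => if decP (Ax s1 s2) then Cst (cU s1) else App (rho u) (rho v)
      | App (App (Cst (cPi s1 s2' s3)) A) B =>
          if decP (s3 = s2 /\ Rl s1 s2' s3)
          then Pi (App (Cst (cEps s1)) (rho A)) (App (Cst (cEps s2')) (App (lift 1 (rho B)) (Var 0)))
          else App (rho u) (rho v)
      | _ => App (rho u) (rho v)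
      end
    | _ => App (rho u) (rho v)
    end
  | Lam A M => Lam (rho A) (rho M)
  | Pi A B => Pi (rho A) (rho B)
  | _ => t
  end.

Lemma par_lam_inv : forall A M t, par (Lam A M) t -> exists A' M', t = Lam A' M' /\ par A A' /\ par M M'.
Proof. intros. inversion H; subst; eauto. Qed.
Lemma par_cst_inv : forall c t, par (Cst c) t -> t = Cst c.
Proof. intros. inversion H; subst; auto. Qed.
Lemma par_pi_inv : forall s1 s2 s3 A B t, par (App (App (Cst (cPi s1 s2 s3)) A) B) t ->
  exists A' B', t = App (App (Cst (cPi s1 s2 s3)) A') B' /\ par A A' /\ par B B'.
Proof. intros. inversion H; subst.
  match goal with Hp : par (App (Cst _) A) _ |- _ => inversion Hp; subst end.
  match goal with Hp : par (Cst _) _ |- _ => inversion Hp; subst end. eauto. Qed.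

Lemma par_rho : forall t u, par t u -> par u (rho t).
Proof. induction 1.
  - constructor.
  - constructor.
  - destruct u.
    + destruct l; try (simpl; constructor; auto; fail).
      apply par_cst_inv in H; subst.
      destruct v; try (simpl; constructor; auto; fail).
      * destruct l; try (simpl; constructor; auto; fail).
        apply par_cst_inv in H0; subst. simpl.
        match goal with |- context [decP ?P] => destruct (decP P) end.
        apply par_ax; auto. constructor; auto.
      * destruct v1; try (simpl; constructor; auto; fail).
        destruct v1_1; try (simpl; constructor; auto; fail).
        destruct l; try (simpl; constructor; auto; fail).
        simpl. match goal with |- context [decP ?P] => destruct (decP P) as [[Heq Hr]|Hn] end.
        -- subst. apply par_pi_inv in H0. destruct H0 as (A' & B' & -> & HA & HB).
           simpl in IHpar2. apply par_pi_inv in IHpar2. destruct IHpar2 as (A'' & B'' & E & HA' & HB').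
           injection E; intros; subst. apply par_rl; auto.
        -- constructor; auto.
    + simpl. constructor; auto.
    + simpl. constructor; auto.
    + apply par_lam_inv in H. destruct H as (A' & M' & -> & _ & HM).
      simpl in IHpar1 |- *. apply par_lam_inv in IHpar1. destruct IHpar1 as (A'' & M'' & E & _ & HM').
      injection E; intros; subst. apply par_beta; auto.
    + simpl. constructor; auto.
  - simpl. constructor; auto.
  - simpl. constructor; auto.
  - simpl. apply par_subst; auto.
  - simpl. destruct (decP (Ax s1 s2)). constructor. contradiction.
  - simpl. destruct (decP (s3 = s3 /\ Rl s1 s2 s3)) as [_|n].
    + constructor. constructor. constructor. auto. constructor. constructor.
      constructor. apply par_lift; auto. constructor.
    + exfalso; auto.
Qed.

Definition parstar := clos_refl_trans_1n tm par.

Lemma strip : forall t u1 u2, par t u1 -> parstar t u2 -> exists w, parstar u1 w /\ par u2 w.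
Proof. intros t u1 u2 H1 H2. revert u1 H1. induction H2; intros.
  - exists u1. split. constructor. auto.
  - assert (par y (rho x)) by (apply par_rho; auto).
    assert (par u1 (rho x)) by (apply par_rho; auto).
    destruct (IHclos_refl_trans_1n _ H0) as (w & Hw1 & Hw2).
    exists w. split; auto. econstructor; eauto.
Qed.

Lemma parstar_confl : forall t u1 u2, parstar t u1 -> parstar t u2 -> exists w, parstar u1 w /\ parstar u2 w.
Proof. intros t u1 u2 H1. revert u2. induction H1; intros.
  - exists u2. split; auto. constructor.
  - destruct (strip _ _ _ H H0) as (w & Hw1 & Hw2).
    destruct (IHclos_refl_trans_1n _ Hw1) as (w' & ? & ?).
    exists w'. split; auto. econstructor; eauto.
Qed.

Lemma parstar_trans : forall x y z, parstar x y -> parstar y z -> parstar x z.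
Proof. intros x y z H H0. revert H0. induction H; intros; auto. econstructor. exact H. apply IHclos_refl_trans_1n. exact H1. Qed.

Lemma red_parstar : forall t u, red t u -> parstar t u.
Proof. induction 1. econstructor. apply step_par; eauto. constructor. constructor.
  eapply parstar_trans; eauto. Qed.

Lemma parstar_red : forall t u, parstar t u -> red t u.
Proof. induction 1. apply rt_refl. eapply rt_trans; eauto. apply par_red; auto. Qed.

Lemma church_rosser : forall x y, conv x y -> exists w, red x w /\ red y w.
Proof. induction 1.
  - exists y. split. apply rt_step; auto. apply rt_refl.
  - exists x. split; apply rt_refl.
  - destruct IHclos_refl_sym_trans as (w & ? & ?). exists w; split; auto.
  - destruct IHclos_refl_sym_trans1 as (w1 & ? & ?).
    destruct IHclos_refl_sym_trans2 as (w2 & ? & ?).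
    destruct (parstar_confl _ _ _ (red_parstar _ _ H2) (red_parstar _ _ H3)) as (w & ? & ?).
    exists w. split; eapply rt_trans; eauto; apply parstar_red; auto.
Qed.

Lemma red_conv : forall t u, red t u -> conv t u.
Proof. induction 1. apply conv_step; auto. apply conv_refl. eapply conv_trans; eauto. Qed.

Lemma red_cst : forall c w, red (Cst c) w -> w = Cst c.
Proof. intros. apply clos_rt_rt1n in H. remember (Cst c) as t. induction H; auto.
  subst. inversion H. inversion H1. Qed.

Lemma red_pi_inv : forall A B w, red (Pi A B) w -> exists A' B', w = Pi A' B' /\ red A A' /\ red B B'.
Proof. intros. apply clos_rt_rt1n in H. remember (Pi A B) as t. revert A B Heqt.
  induction H; intros; subst.
  - exists A, B. repeat split; apply rt_refl.
  - inversion H; subst.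
    + inversion H1.
    + destruct (IHclos_refl_trans_1n _ _ eq_refl) as (A'' & B'' & -> & ? & ?).
      exists A'', B''. repeat split; auto. eapply rt_trans; eauto. apply rt_step; auto.
    + destruct (IHclos_refl_trans_1n _ _ eq_refl) as (A'' & B'' & -> & ? & ?).
      exists A'', B''. repeat split; auto. eapply rt_trans; eauto. apply rt_step; auto.
Qed.

Lemma conv_pi_inv : forall A B A' B', conv (Pi A B) (Pi A' B') -> conv A A' /\ conv B B'.
Proof. intros. destruct (church_rosser _ _ H) as (w & H1 & H2).
  destruct (red_pi_inv _ _ _ H1) as (a & b & -> & ? & ?).
  destruct (red_pi_inv _ _ _ H2) as (a' & b' & E & ? & ?). injection E; intros; subst.
  split; eapply conv_trans; [apply red_conv; eauto | apply conv_sym; apply red_conv; eauto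
    | apply red_conv; eauto | apply conv_sym; apply red_conv; eauto]. Qed.

Lemma conv_cst_inv : forall c c', conv (Cst c) (Cst c') -> c = c'.
Proof. intros. destruct (church_rosser _ _ H) as (w & H1 & H2).
  apply red_cst in H1. apply red_cst in H2. subst. injection H2; auto. Qed.

Lemma conv_cst_pi : forall c A B, ~ conv (Cst c) (Pi A B).
Proof. intros c A B H. destruct (church_rosser _ _ H) as (w & H1 & H2).
  apply red_cst in H1. subst. destruct (red_pi_inv _ _ _ H2) as (? & ? & ? & _). discriminate. Qed.

End LPConf.

Inductive lev := LObj | LTF | LKd.

Section Gen.
Context {K : Type}.
Variables (IsSort : K -> Prop) (Ax : K -> K -> Prop) (Rl : K -> K -> K -> Prop)
  (Sig : K -> term K -> Prop) (hd : term K -> term K -> Prop).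
Notation typ := (typ K IsSort Ax Rl Sig hd).
Notation conv := (conv K hd).

Lemma gen_cst : forall G c T, typ G (Cst c) T ->
  (exists s2, Ax c s2 /\ conv (Cst s2) T) \/ (exists T0, Sig c T0 /\ conv T0 T).
Proof. intros G c T H. remember (Cst c) as P. revert c HeqP.
  induction H; intros; try discriminate.
  - injection HeqP; intros; subst. left. exists s2. split; auto. apply conv_refl.
  - injection HeqP; intros; subst. right. exists T. split; auto. apply conv_refl.
  - destruct (IHtyp1 _ HeqP) as [(s2 & ? & ?)|(T0 & ? & ?)].
    + left. exists s2. split; auto. eapply conv_trans; eauto.
    + right. exists T0. split; auto. eapply conv_trans; eauto.
Qed.

Lemma gen_app : forall G u v T, typ G (App u v) T ->
  exists A B, typ G u (Pi A B) /\ typ G v A /\ conv (subst v B) T.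
Proof. intros G u v T H. remember (App u v) as P. revert u v HeqP.
  induction H; intros; try discriminate.
  - injection HeqP; intros; subst. exists A, B. repeat split; auto. apply conv_refl.
  - destruct (IHtyp1 _ _ HeqP) as (A0 & B0 & ? & ? & ?).
    exists A0, B0. repeat split; auto. eapply conv_trans; eauto.
Qed.

Lemma gen_lam : forall G A M T, typ G (Lam A M) T ->
  exists B s, typ (A :: G) M B /\ typ G (Pi A B) (Cst s) /\ conv (Pi A B) T.
Proof. intros G A M T H. remember (Lam A M) as P. revert A M HeqP.
  induction H; intros; try discriminate.
  - injection HeqP; intros; subst. exists B, s. repeat split; auto. apply conv_refl.
  - destruct (IHtyp1 _ _ HeqP) as (B0 & s0 & ? & ? & ?).
    exists B0, s0. repeat split; auto. eapply conv_trans; eauto.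
Qed.

Lemma gen_var : forall G n T, typ G (Var n) T ->
  exists A, nth_error G n = Some A /\ conv (lift (S n) A) T.
Proof. intros G n T H. remember (Var n) as P. revert n HeqP.
  induction H; intros; try discriminate.
  - injection HeqP; intros; subst. exists A. split; auto. apply conv_refl.
  - destruct (IHtyp1 _ HeqP) as (A0 & ? & ?). exists A0. split; auto. eapply conv_trans; eauto.
Qed.
End Gen.

Section LPClass.
Context {Srt : Type}.
Variables (Ax : Srt -> Srt -> Prop) (Rl : Srt -> Srt -> Srt -> Prop).
Notation tm := (term (LPC Srt)).
Notation hd := (LP_hd Ax Rl).
Notation step := (step (LPC Srt) hd).
Notation conv := (conv (LPC Srt) hd).
Notation typ := (typLP Ax Rl).

Fixpoint lvl (t : tm) : option lev :=
  match t with
  | Cst c => match c with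
             | cType => Some LKd | cKind => None
             | cU _ | cEps _ => Some LTF
             | cDot _ | cPi _ _ _ => Some LObj end
  | Var _ => Some LObj
  | App u v => match lvl u, lvl v with
               | Some LObj, Some LObj => Some LObj
               | Some LTF, Some LObj => Some LTF
               | _, _ => None end
  | Lam A M => match lvl A, lvl M with
               | Some LTF, Some LObj => Some LObj
               | Some LTF, Some LTF => Some LTF
               | _, _ => None end
  | Pi A B => match lvl A, lvl B with
              | Some LTF, Some LTF => Some LTF
              | Some LTF, Some LKd => Some LKd
              | _, _ => None end
  end.

Lemma lvl_app_inv : forall u v l, lvl (App u v) = Some l ->
  (l = LObj /\ lvl u = Some LObj /\ lvl v = Some LObj) \/ (l = LTF /\ lvl u = Some LTF /\ lvl v = Some LObj).
Proof. intros. simpl in H. destruct (lvl u) as [[]|]; destruct (lvl v) as [[]|]; try discriminate;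
  injection H; intros; subst; auto. Qed.
Lemma lvl_lam_inv : forall u v l, lvl (Lam u v) = Some l ->
  (l = LObj /\ lvl u = Some LTF /\ lvl v = Some LObj) \/ (l = LTF /\ lvl u = Some LTF /\ lvl v = Some LTF).
Proof. intros. simpl in H. destruct (lvl u) as [[]|]; destruct (lvl v) as [[]|]; try discriminate;
  injection H; intros; subst; auto. Qed.
Lemma lvl_pi_inv : forall u v l, lvl (Pi u v) = Some l ->
  (l = LTF /\ lvl u = Some LTF /\ lvl v = Some LTF) \/ (l = LKd /\ lvl u = Some LTF /\ lvl v = Some LKd).
Proof. intros. simpl in H. destruct (lvl u) as [[]|]; destruct (lvl v) as [[]|]; try discriminate;
  injection H; intros; subst; auto. Qed.

Lemma lvl_lift : forall t k n, lvl (lift_rec k n t) = lvl t.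
Proof. induction t; intros; simpl; auto.
  - destruct (Nat.leb k n); auto.
  - rewrite IHt1, IHt2; auto.
  - rewrite IHt1, IHt2; auto.
  - rewrite IHt1, IHt2; auto. Qed.

Lemma lvl_subst : forall t N k, lvl N = Some LObj -> lvl (subst_rec N k t) = lvl t.
Proof. induction t; intros; simpl; auto.
  - destruct (Nat.compare n k); auto. unfold lift. rewrite lvl_lift; auto.
  - rewrite IHt1, IHt2; auto.
  - rewrite IHt1, IHt2; auto.
  - rewrite IHt1, IHt2; auto. Qed.

Lemma lvl_step : forall t u, step t u -> forall l, lvl t = Some l -> lvl u = Some l.
Proof. induction 1; intros l Hl.
  - apply lvl_app_inv in Hl. destruct Hl as [(-> & H1 & H2)|(-> & H1 & H2)];
    apply lvl_lam_inv in H1; destruct H1 as [(E & H3 & H4)|(E & H3 & H4)]; try discriminate;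
    unfold subst; rewrite lvl_subst; auto.
  - destruct H; simpl in *; auto. unfold lift; rewrite lvl_lift. simpl in Hl.
    destruct (lvl A) as [[]|]; destruct (lvl B) as [[]|]; try discriminate; auto.
  - simpl in *. destruct (lvl u) as [l0|] eqn:E; try discriminate. rewrite (IHstep _ eq_refl). auto.
  - simpl in *. destruct (lvl v) as [l0|] eqn:E; destruct (lvl u) as [[]|]; try discriminate;
    rewrite (IHstep _ eq_refl); auto.
  - simpl in *. destruct (lvl A) as [l0|] eqn:E; try discriminate. rewrite (IHstep _ eq_refl). auto.
  - simpl in *. destruct (lvl M) as [l0|] eqn:E; destruct (lvl A) as [[]|]; try discriminate;
    rewrite (IHstep _ eq_refl); auto.
  - simpl in *. destruct (lvl A) as [l0|] eqn:E; try discriminate. rewrite (IHstep _ eq_refl). auto.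
  - simpl in *. destruct (lvl B) as [l0|] eqn:E; destruct (lvl A) as [[]|]; try discriminate;
    rewrite (IHstep _ eq_refl); auto.
Qed.

Lemma lvl_red : forall t u, red Ax Rl t u -> forall l, lvl t = Some l -> lvl u = Some l.
Proof. induction 1; intros; eauto using lvl_step. Qed.

Lemma lvl_conv : forall t u l1 l2, conv t u -> lvl t = Some l1 -> lvl u = Some l2 -> l1 = l2.
Proof. intros. destruct (church_rosser _ _ _ _ H) as (w & H2 & H3).
  apply (lvl_red _ _ H2) in H0. apply (lvl_red _ _ H3) in H1. rewrite H0 in H1. injection H1; auto. Qed.

Lemma conv_kind_lvl : forall u l, conv (Cst cKind) u -> lvl u = Some l -> False.
Proof. intros. destruct (church_rosser _ _ _ _ H) as (w & H2 & H3).
  apply red_cst in H2. subst. apply (lvl_red _ _ H3) in H0. discriminate. Qed.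

Definition Inv (G : list tm) := forall n A, nth_error G n = Some A -> lvl A = Some LTF.

Lemma Inv_cons : forall A G, lvl A = Some LTF -> Inv G -> Inv (A :: G).
Proof. intros A G H H0 [|n] B E; simpl in E. injection E; intros; subst; auto. eauto. Qed.
Lemma Inv_tail : forall A G, Inv (A :: G) -> Inv G.
Proof. intros A G H n B E. apply (H (S n)). auto. Qed.

Definition Class (M T : tm) :=
  (lvl M = Some LObj /\ lvl T = Some LTF) \/ (lvl M = Some LTF /\ lvl T = Some LKd) \/
  (lvl M = Some LKd /\ T = Cst cKind).

Lemma classify : forall G M T, typ G M T -> Inv G -> Class M T.
Proof. unfold typ. induction 1; intros HI; unfold Class in *.
  - destruct H0; subst. right; right; auto.
  - destruct c; simpl in H0; try contradiction.
    + subst. right; left; auto.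
    + subst. right; left; auto.
    + destruct H0 as (? & ? & ->). left; auto.
    + destruct H0 as (? & ->). left; auto.
  - left. split; auto. unfold lift. rewrite lvl_lift. eauto.
  - destruct H as [(-> & -> & ->)|(-> & -> & ->)].
    + specialize (IHtyp1 HI). simpl in IHtyp1.
      destruct IHtyp1 as [(_ & E)|[(HA & _)|(_ & E)]]; try discriminate.
      specialize (IHtyp2 (Inv_cons _ _ HA HI)). simpl in IHtyp2.
      destruct IHtyp2 as [(_ & E)|[(HB & _)|(_ & E)]]; try discriminate.
      right; left. simpl. rewrite HA, HB. auto.
    + specialize (IHtyp1 HI). simpl in IHtyp1.
      destruct IHtyp1 as [(_ & E)|[(HA & _)|(_ & E)]]; try discriminate.
      specialize (IHtyp2 (Inv_cons _ _ HA HI)). simpl in IHtyp2.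
      destruct IHtyp2 as [(_ & E)|[(_ & E)|(HB & _)]]; try discriminate.
      right; right. simpl. rewrite HA, HB. auto.
  - specialize (IHtyp2 HI).
    assert (HA : lvl A = Some LTF /\ (lvl B = Some LTF \/ lvl B = Some LKd)).
    { destruct IHtyp2 as [(E & _)|[(E & _)|(E & _)]];
      apply lvl_pi_inv in E; destruct E as [(_ & ? & ?)|(_ & ? & ?)]; auto. }
    destruct HA as (HA & HB).
    specialize (IHtyp1 (Inv_cons _ _ HA HI)).
    destruct IHtyp1 as [(E1 & E2)|[(E1 & E2)|(E1 & E2)]].
    + left. simpl. rewrite HA, E1, E2. auto.
    + right; left. simpl. rewrite HA, E1, E2. auto.
    + subst. destruct HB as [E|E]; simpl in E; discriminate.
  - specialize (IHtyp1 HI). specialize (IHtyp2 HI).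
    destruct IHtyp1 as [(E1 & E2)|[(E1 & E2)|(E1 & E2)]]; try discriminate.
    + apply lvl_pi_inv in E2. destruct E2 as [(_ & HA & HB)|(E & _)]; try discriminate.
      destruct IHtyp2 as [(E3 & E4)|[(E3 & E4)|(E3 & E4)]]; try congruence; try (subst; simpl in HA; discriminate).
      left. simpl. rewrite E1, E3. unfold subst. rewrite lvl_subst; auto.
    + apply lvl_pi_inv in E2. destruct E2 as [(E & _)|(_ & HA & HB)]; try discriminate.
      destruct IHtyp2 as [(E3 & E4)|[(E3 & E4)|(E3 & E4)]]; try congruence; try (subst; simpl in HA; discriminate).
      right; left. simpl. rewrite E1, E3. unfold subst. rewrite lvl_subst; auto.
  - specialize (IHtyp1 HI). specialize (IHtyp2 HI).
    destruct H0 as [->| ->]; simpl in IHtyp2.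
    + destruct IHtyp2 as [(_ & E)|[(HB & _)|(_ & E)]]; try discriminate.
      destruct IHtyp1 as [(E1 & E2)|[(E1 & E2)|(E1 & E2)]].
      * left. split; auto.
      * exfalso. pose proof (lvl_conv _ _ _ _ H2 E2 HB). discriminate.
      * subst. exfalso. eapply conv_kind_lvl; eauto.
    + destruct IHtyp2 as [(_ & E)|[(_ & E)|(HB & _)]]; try discriminate.
      destruct IHtyp1 as [(E1 & E2)|[(E1 & E2)|(E1 & E2)]].
      * exfalso. pose proof (lvl_conv _ _ _ _ H2 E2 HB). discriminate.
      * right; left. split; auto.
      * subst. exfalso. eapply conv_kind_lvl; eauto.
Qed.

End LPClass.

Section TrKN.
Context {Srt : Type}.
Variables (Ax : Srt -> Srt -> Prop) (Rl : Srt -> Srt -> Srt -> Prop).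
Notation tm := (term (LPC Srt)).
Notation tmS := (term (option Srt)).
Notation hd := (LP_hd Ax Rl).
Notation step := (step (LPC Srt) hd).
Notation conv := (conv (LPC Srt) hd).
Notation hdS := (fun (_ _ : tmS) => False).
Notation convS := (Defs.conv (option Srt) hdS).

Definition phiPi (s1 s2 s3 : Srt) : tmS :=
  Lam (Cst (Some s1)) (Lam (Pi (Var 0) (Cst (Some s2))) (Pi (Var 1) (App (Var 1) (Var 0)))).

Fixpoint Tr (t : tm) : tmS :=
  match t with
  | Cst c => match c with
             | cType => Cst None | cKind => Cst None
             | cU s => Cst (Some s)
             | cEps s => Lam (Cst (Some s)) (Var 0)
             | cDot s => Cst (Some s)
             | cPi s1 s2 s3 => phiPi s1 s2 s3 end
  | Var n => Var n
  | App u v => match u with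
               | Cst (cEps _) => Tr v
               | _ => App (Tr u) (Tr v) end
  | Lam A M => Lam (Tr A) (Tr M)
  | Pi A B => Pi (Tr A) (Tr B)
  end.

Definition isEps (t : tm) : bool := match t with Cst (cEps _) => true | _ => false end.

Lemma Tr_app_nE : forall u v, isEps u = false -> Tr (App u v) = App (Tr u) (Tr v).
Proof. intros. destruct u as [c| | | | ]; simpl; auto. destruct c; simpl in *; auto. discriminate. Qed.

Lemma isEps_lift : forall u k n, isEps (lift_rec k n u) = isEps u.
Proof. destruct u as [c|i| | | ]; intros; simpl; auto. destruct (Nat.leb k i); auto. Qed.

Lemma Tr_lift : forall t k n, Tr (lift_rec k n t) = lift_rec k n (Tr t).
Proof. induction t as [c|i|t1 IHt1 t2 IHt2|t1 IHt1 t2 IHt2|t1 IHt1 t2 IHt2]; intros.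
  - destruct c; reflexivity.
  - simpl. destruct (Nat.leb k i); reflexivity.
  - destruct (isEps t1) eqn:E.
    + destruct t1 as [c| | | | ]; try discriminate. destruct c; try discriminate. simpl. auto.
    + change (lift_rec k n (App t1 t2)) with (App (lift_rec k n t1) (lift_rec k n t2)).
      rewrite !Tr_app_nE; auto. simpl. rewrite IHt1, IHt2; auto. rewrite isEps_lift; auto.
  - simpl. rewrite IHt1, IHt2; auto.
  - simpl. rewrite IHt1, IHt2; auto.
Qed.

Lemma isEps_subst : forall u N k, isEps N = false -> isEps (subst_rec N k u) = isEps u.
Proof. destruct u as [c|i| | | ]; intros; simpl; auto. destruct (Nat.compare i k); auto.
  unfold lift. rewrite isEps_lift; auto. Qed.

Lemma Tr_subst : forall t N k, isEps N = false -> Tr (subst_rec N k t) = subst_rec (Tr N) k (Tr t).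
Proof. induction t as [c|i|t1 IHt1 t2 IHt2|t1 IHt1 t2 IHt2|t1 IHt1 t2 IHt2]; intros.
  - destruct c; reflexivity.
  - simpl. destruct (Nat.compare i k); auto. unfold lift. apply Tr_lift.
  - destruct (isEps t1) eqn:E.
    + destruct t1 as [c| | | | ]; try discriminate. destruct c; try discriminate. simpl. auto.
    + change (subst_rec N k (App t1 t2)) with (App (subst_rec N k t1) (subst_rec N k t2)).
      rewrite !Tr_app_nE; auto. simpl. rewrite IHt1, IHt2; auto. rewrite isEps_subst; auto.
  - simpl. rewrite IHt1, IHt2; auto.
  - simpl. rewrite IHt1, IHt2; auto.
Qed.

Lemma Tr_app_conv : forall u v, convS (Tr (App u v)) (App (Tr u) (Tr v)).
Proof. intros. destruct (isEps u) eqn:E.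
  - destruct u as [c| | | | ]; try discriminate. destruct c; try discriminate. simpl.
    apply conv_sym. eapply conv_trans. apply conv_step. apply st_beta.
    unfold subst. simpl. rewrite lift0. apply conv_refl.
  - rewrite Tr_app_nE; auto. apply conv_refl. Qed.

Lemma Tr_subst_conv : forall t N k, convS (Tr (subst_rec N k t)) (subst_rec (Tr N) k (Tr t)).
Proof. induction t as [c|i|t1 IHt1 t2 IHt2|t1 IHt1 t2 IHt2|t1 IHt1 t2 IHt2]; intros.
  - destruct c; apply conv_refl.
  - simpl. destruct (Nat.compare i k); try apply conv_refl. unfold lift. rewrite Tr_lift. apply conv_refl.
  - change (subst_rec N k (App t1 t2)) with (App (subst_rec N k t1) (subst_rec N k t2)).
    eapply conv_trans. apply Tr_app_conv.
    eapply conv_trans. apply conv_app. apply IHt1. apply IHt2.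
    change (App (subst_rec (Tr N) k (Tr t1)) (subst_rec (Tr N) k (Tr t2))) with
      (subst_rec (Tr N) k (App (Tr t1) (Tr t2))).
    apply conv_subst1. intros; contradiction. apply conv_sym, Tr_app_conv.
  - simpl. apply conv_lam; auto.
  - simpl. apply conv_pi; auto.
Qed.

Lemma Tr_step : forall t u, step t u -> convS (Tr t) (Tr u).
Proof. induction 1.
  - rewrite Tr_app_nE by reflexivity. simpl. eapply conv_trans. apply conv_step. apply st_beta.
    apply conv_sym. apply Tr_subst_conv.
  - destruct H.
    + apply conv_refl.
    + change (Tr (App (Cst (cEps s3)) (App (App (Cst (cPi s1 s2 s3)) A) B)))
        with (App (App (phiPi s1 s2 s3) (Tr A)) (Tr B)).
      eapply conv_trans. apply conv_step. apply st_appl. apply st_beta.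
      assert (E : subst (Tr A) (Lam (Pi (Var 0) (Cst (Some s2))) (Pi (Var 1) (App (Var 1) (Var 0))))
        = Lam (Pi (lift 0 (Tr A)) (Cst (Some s2))) (Pi (lift 1 (Tr A)) (App (Var 1) (Var 0)))) by reflexivity.
      rewrite E. eapply conv_trans. apply conv_step. apply st_beta.
      assert (E2 : subst (Tr B) (Pi (lift 1 (Tr A)) (App (Var 1) (Var 0)))
         = Pi (subst (Tr B) (lift 1 (Tr A))) (App (lift 1 (Tr B)) (Var 0))) by reflexivity.
      rewrite E2. assert (E3 : subst (Tr B) (lift 1 (Tr A)) = Tr A) by (apply subst_lift_cancel). rewrite E3.
      change (Tr (Pi (App (Cst (cEps s1)) A) (App (Cst (cEps s2)) (App (lift 1 B) (Var 0)))))
        with (Pi (Tr A) (Tr (App (lift 1 B) (Var 0)))).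
      apply conv_pi. apply conv_refl. apply conv_sym. eapply conv_trans. apply Tr_app_conv.
      unfold lift. rewrite Tr_lift. apply conv_refl.
  - eapply conv_trans. apply Tr_app_conv. eapply conv_trans. apply conv_app. eauto. apply conv_refl.
    apply conv_sym, Tr_app_conv.
  - eapply conv_trans. apply Tr_app_conv. eapply conv_trans. apply conv_app. apply conv_refl. eauto.
    apply conv_sym, Tr_app_conv.
  - simpl. apply conv_lam; auto. apply conv_refl.
  - simpl. apply conv_lam; auto. apply conv_refl.
  - simpl. apply conv_pi; auto. apply conv_refl.
  - simpl. apply conv_pi; auto. apply conv_refl.
Qed.

Lemma Tr_conv : forall t u, conv t u -> convS (Tr t) (Tr u).
Proof. induction 1.
  - apply Tr_step; auto.
  - apply conv_refl.
  - apply conv_sym; auto.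
  - eapply conv_trans; eauto. Qed.

Definition kapp (X v : tm) : tm :=
  match X with
  | Lam A F => match lvl F with Some LTF => subst v F | _ => App X v end
  | _ => App X v
  end.

Fixpoint KN (t : tm) : tm :=
  match t with
  | App u v => kapp (KN u) (KN v)
  | Lam A M => Lam (KN A) (KN M)
  | Pi A B => Pi (KN A) (KN B)
  | _ => t
  end.

Lemma kapp_obj : forall X v, lvl X = Some LObj -> kapp X v = App X v.
Proof. intros. destruct X; auto. simpl. apply lvl_lam_inv in H.
  destruct H as [(_ & _ & ->)|(E & _)]; auto. discriminate. Qed.

Lemma kapp_lift : forall X v k n, lift_rec k n (kapp X v) = kapp (lift_rec k n X) (lift_rec k n v).
Proof. intros. destruct X; simpl; auto.
  - destruct (Nat.leb k n0); auto.
  - rewrite lvl_lift. destruct (lvl X2) as [[]|]; simpl; auto.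
    unfold subst. apply (commut_lift_subst_rec2 X2 v k 0 n).
Qed.

Lemma kapp_subst : forall X v M k, lvl M = Some LObj ->
  subst_rec M k (kapp X v) = kapp (subst_rec M k X) (subst_rec M k v).
Proof. intros. destruct X; simpl; auto.
  - destruct (Nat.compare n k); auto. rewrite kapp_obj; auto. unfold lift. rewrite lvl_lift; auto.
  - rewrite lvl_subst by auto. destruct (lvl X2) as [[]|]; simpl; auto.
    unfold subst. apply (distr_subst_rec X2 v M k 0).
Qed.

Lemma KN_lift : forall t k n, KN (lift_rec k n t) = lift_rec k n (KN t).
Proof. induction t as [c|i|t1 IHt1 t2 IHt2|t1 IHt1 t2 IHt2|t1 IHt1 t2 IHt2]; intros; simpl; auto.
  - destruct (Nat.leb k i); auto.
  - rewrite IHt1, IHt2, kapp_lift; auto.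
  - rewrite IHt1, IHt2; auto.
  - rewrite IHt1, IHt2; auto. Qed.

Lemma kapp_lvl : forall X v l, lvl (App X v) = Some l -> lvl (kapp X v) = Some l.
Proof. intros. destruct X; auto. simpl. apply lvl_app_inv in H.
  destruct H as [(-> & H1 & H2)|(-> & H1 & H2)]; apply lvl_lam_inv in H1.
  - destruct H1 as [(_ & E1 & E)|(E & _)]; try discriminate. rewrite E. simpl. rewrite E1, E, H2. auto.
  - destruct H1 as [(E & _)|(_ & _ & E)]; try discriminate. rewrite E.
    unfold subst. rewrite lvl_subst; auto.
Qed.

Lemma KN_lvl : forall t l, lvl t = Some l -> lvl (KN t) = Some l.
Proof. induction t as [c|i|t1 IHt1 t2 IHt2|t1 IHt1 t2 IHt2|t1 IHt1 t2 IHt2]; intros; simpl; auto.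
  - apply kapp_lvl. apply lvl_app_inv in H. destruct H as [(-> & H1 & H2)|(-> & H1 & H2)];
    simpl; rewrite (IHt1 _ H1), (IHt2 _ H2); auto.
  - apply lvl_lam_inv in H. destruct H as [(-> & H1 & H2)|(-> & H1 & H2)];
    simpl; rewrite (IHt1 _ H1), (IHt2 _ H2); auto.
  - apply lvl_pi_inv in H. destruct H as [(-> & H1 & H2)|(-> & H1 & H2)];
    simpl; rewrite (IHt1 _ H1), (IHt2 _ H2); auto.
Qed.

Lemma KN_subst : forall t N k, lvl N = Some LObj -> KN (subst_rec N k t) = subst_rec (KN N) k (KN t).
Proof. induction t as [c|i|t1 IHt1 t2 IHt2|t1 IHt1 t2 IHt2|t1 IHt1 t2 IHt2]; intros; simpl; auto.
  - destruct (Nat.compare i k); auto. unfold lift. apply KN_lift.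
  - rewrite IHt1, IHt2, kapp_subst; auto. apply KN_lvl; auto.
  - rewrite IHt1, IHt2; auto.
  - rewrite IHt1, IHt2; auto. Qed.

Lemma kapp_conv : forall X v, conv (kapp X v) (App X v).
Proof. intros. destruct X; try apply conv_refl. simpl. destruct (lvl X2) as [[]|]; try apply conv_refl.
  apply conv_sym. apply conv_step. apply st_beta. Qed.

Lemma KN_conv : forall t, conv (KN t) t.
Proof. induction t as [c|i|t1 IHt1 t2 IHt2|t1 IHt1 t2 IHt2|t1 IHt1 t2 IHt2]; simpl; try apply conv_refl.
  - eapply conv_trans. apply kapp_conv. apply conv_app; auto.
  - apply conv_lam; auto.
  - apply conv_pi; auto. Qed.

Inductive Om : tm -> Prop :=
| om_var n : Om (Var n)
| om_dot s : Om (Cst (cDot s))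
| om_pi s1 s2 s3 : Om (Cst (cPi s1 s2 s3))
| om_app u v : Om u -> Om v -> Om (App u v)
| om_lam A M : Tm A -> Om M -> Om (Lam A M)
with Tm : tm -> Prop :=
| tm_u s : Tm (Cst (cU s))
| tm_eps s M : Om M -> Tm (App (Cst (cEps s)) M)
| tm_pi A B : Tm A -> Tm B -> Tm (Pi A B).

Scheme Om_mind := Induction for Om Sort Prop with Tm_mind := Induction for Tm Sort Prop.

Lemma OmTm_lvl : (forall t, Om t -> lvl t = Some LObj) /\ (forall t, Tm t -> lvl t = Some LTF).
Proof. split; [apply (Om_mind (fun t _ => lvl t = Some LObj) (fun t _ => lvl t = Some LTF))
  | apply (Tm_mind (fun t _ => lvl t = Some LObj) (fun t _ => lvl t = Some LTF))];
  intros; simpl; auto; try rewrite H; try rewrite H0; auto. Qed.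

Lemma OmTm_KN : (forall t, Om t -> KN t = t) /\ (forall t, Tm t -> KN t = t).
Proof. split; [apply (Om_mind (fun t _ => KN t = t) (fun t _ => KN t = t))
  | apply (Tm_mind (fun t _ => KN t = t) (fun t _ => KN t = t))];
  intros; simpl; auto; try (rewrite H, H0; auto; fail).
  - rewrite H, H0. apply kapp_obj. apply (proj1 OmTm_lvl); auto.
  - rewrite H. reflexivity.
  - rewrite H, H0. apply kapp_obj. apply (proj1 OmTm_lvl); auto.
  - rewrite H. reflexivity.
Qed.

Lemma OmTm_phi : (forall t, Om t -> phi t = Some (Tr t)) /\ (forall t, Tm t -> psi t = Some (Tr t)).
Proof. split; [apply (Om_mind (fun t _ => phi t = Some (Tr t)) (fun t _ => psi t = Some (Tr t)))
  | apply (Tm_mind (fun t _ => phi t = Some (Tr t)) (fun t _ => psi t = Some (Tr t)))];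
  intros; auto.
  - simpl. rewrite H, H0. destruct u as [c| | | | ]; auto. destruct c; auto. inversion o.
  - simpl. rewrite H, H0. auto.
  - simpl. rewrite H, H0. auto.
  - simpl. rewrite H, H0. destruct u as [c| | | | ]; auto. destruct c; auto. inversion o.
  - simpl. rewrite H, H0. auto.
  - simpl. rewrite H, H0. auto.
Qed.

End TrKN.

Section Main.
Context {Srt : Type}.
Variables (Ax : Srt -> Srt -> Prop) (Rl : Srt -> Srt -> Srt -> Prop).
Notation tm := (term (LPC Srt)).
Notation tmS := (term (option Srt)).
Notation hd := (LP_hd Ax Rl).
Notation conv := (conv (LPC Srt) hd).
Notation hdS := (fun (_ _ : tmS) => False).
Notation convS := (Defs.conv (option Srt) hdS).
Notation tS := (typStar Ax Rl).
Notation wS := (wfStar Ax Rl).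
Notation typ := (typLP Ax Rl).

Lemma substS : forall e M A, tS e M A -> forall g N T n f, tS g N T ->
  sub_in_env g N T n e f -> tS f (subst_rec N n M) (subst_rec N n A).
Proof. intros. eapply substitution_gen; eauto; intros; simpl in *; try contradiction; auto. Qed.

Lemma typS_wf : forall G M T, tS G M T -> wS G.
Proof. intros. eapply typ_wf; eauto. Qed.

Lemma sort_typ : forall D, wS D -> forall s, exists s', tS D (Cst (Some s)) (Cst s').
Proof. intros. destruct (classic (exists s', Ax s s')) as [[s' H0]|H0].
  - exists (Some s'). apply t_sort; auto.
  - exists None. apply t_sort; auto. Qed.

Lemma rl_total : forall a b, exists c, starRl Rl a b c.
Proof. intros. destruct (classic (exists s1 s2 s3, a = Some s1 /\ b = Some s2 /\ Rl s1 s2 s3))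
  as [(s1 & s2 & s3 & -> & -> & H)|H].
  - exists (Some s3). simpl. eauto.
  - exists None. simpl. auto. Qed.

Lemma phiPi_typ : forall D s1 s2 s3, wS D -> Rl s1 s2 s3 ->
  tS D (phiPi s1 s2 s3) (Pi (Cst (Some s1)) (Pi (Pi (Var 0) (Cst (Some s2))) (Cst (Some s3)))).
Proof. intros D s1 s2 s3 W Hr. unfold typStar, wfStar in *.
  destruct (sort_typ _ W s1) as (σ1 & HS1).
  assert (W1 : wS (Cst (Some s1) :: D)) by (eapply wf_cons; [exact I | exact HS1]).
  assert (HV0 : tS (Cst (Some s1) :: D) (Var 0) (Cst (Some s1))).
  { assert (H : tS (Cst (Some s1) :: D) (Var 0) (lift 1 (Cst (Some s1)))) by (apply t_var; auto).
    exact H. }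
  assert (W2 : wS (Var 0 :: Cst (Some s1) :: D)) by (eapply wf_cons; [exact I | exact HV0]).
  destruct (sort_typ _ W2 s2) as (σ2 & HS2).
  destruct (rl_total (Some s1) σ2) as (r1 & Hr1).
  assert (Pi1 : tS (Cst (Some s1) :: D) (Pi (Var 0) (Cst (Some s2))) (Cst r1)) by (eapply t_pi; eauto).
  set (D3 := Pi (Var 0) (Cst (Some s2)) :: Cst (Some s1) :: D).
  assert (W3 : wS D3) by (eapply wf_cons; [exact I | exact Pi1]).
  destruct (sort_typ _ W3 s3) as (σ3 & HS3).
  destruct (rl_total r1 σ3) as (r2 & Hr2).
  assert (Pi2 : tS (Cst (Some s1) :: D) (Pi (Pi (Var 0) (Cst (Some s2))) (Cst (Some s3))) (Cst r2))
    by (eapply t_pi; eauto).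
  destruct (rl_total σ1 r2) as (r3 & Hr3).
  assert (Pi3 : tS D (Pi (Cst (Some s1)) (Pi (Pi (Var 0) (Cst (Some s2))) (Cst (Some s3)))) (Cst r3))
    by (eapply t_pi; eauto).
  assert (HV1 : tS D3 (Var 1) (Cst (Some s1))).
  { assert (H : tS D3 (Var 1) (lift 2 (Cst (Some s1)))) by (apply t_var; auto). exact H. }
  assert (W4 : wS (Var 1 :: D3)) by (eapply wf_cons; [exact I | exact HV1]).
  assert (HV1b : tS (Var 1 :: D3) (Var 1) (Pi (Var 2) (Cst (Some s2)))).
  { assert (H : tS (Var 1 :: D3) (Var 1) (lift 2 (Pi (Var 0) (Cst (Some s2))))) by (apply t_var; auto).
    exact H. }
  assert (HV0b : tS (Var 1 :: D3) (Var 0) (Var 2)).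
  { assert (H : tS (Var 1 :: D3) (Var 0) (lift 1 (Var 1))) by (apply t_var; auto). exact H. }
  assert (HApp : tS (Var 1 :: D3) (App (Var 1) (Var 0)) (Cst (Some s2))).
  { assert (H : tS (Var 1 :: D3) (App (Var 1) (Var 0)) (subst (Var 0) (Cst (Some s2))))
      by (eapply t_app; eauto). exact H. }
  assert (Pi4 : tS D3 (Pi (Var 1) (App (Var 1) (Var 0))) (Cst (Some s3))).
  { eapply t_pi; eauto. simpl. eauto. }
  assert (Lam1 : tS (Cst (Some s1) :: D) (Lam (Pi (Var 0) (Cst (Some s2))) (Pi (Var 1) (App (Var 1) (Var 0))))
     (Pi (Pi (Var 0) (Cst (Some s2))) (Cst (Some s3)))).
  { eapply t_lam; [exact I | exact Pi4 | exact Pi2]. }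
  eapply t_lam; [exact I | exact Lam1 | exact Pi3].
Qed.

Inductive FamS : list tmS -> tm -> tm -> Prop :=
| fs_ty D F K : (exists s, tS D (Tr F) (Cst s)) -> conv K (Cst cType) -> FamS D F K
| fs_eps D s K : conv K (Pi (Cst (cU s)) (Cst cType)) -> FamS D (Cst (cEps s)) K
| fs_lam D A F A0 K K' : conv K (Pi A0 K') -> conv A0 A -> (exists s, tS D (Tr A) (Cst s)) ->
    FamS (Tr A :: D) F K' -> FamS D (Lam A F) K.

Lemma FamS_conv : forall D F K K', FamS D F K -> conv K K' -> FamS D F K'.
Proof. intros. destruct H.
  - apply fs_ty; auto. eapply conv_trans; eauto. apply conv_sym; auto.
  - apply fs_eps; auto. eapply conv_trans; eauto. apply conv_sym; auto.
  - eapply fs_lam; eauto. eapply conv_trans; eauto. apply conv_sym; auto. Qed.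

Lemma FamS_type : forall D F, FamS D F (Cst cType) -> exists s, tS D (Tr F) (Cst s).
Proof. intros. inversion H; subst; auto.
  - exfalso. eapply conv_cst_pi; eauto.
  - exfalso. eapply conv_cst_pi; eauto. Qed.

Lemma hdsubst : forall t u N k, hd t u -> hd (subst_rec N k t) (subst_rec N k u).
Proof. apply hd_subst. Qed.

Lemma FamS_subst : forall e F K, FamS e F K -> forall g (N : tm) T n f, tS g (Tr N) T ->
  sub_in_env g (Tr N) T n e f -> isEps N = false -> FamS f (subst_rec N n F) (subst_rec N n K).
Proof. induction 1; intros.
  - apply fs_ty.
    + destruct H as (s & H). exists s. rewrite Tr_subst by auto.
      change (Cst s) with (subst_rec (Tr N) n (Cst (K := option Srt) s)). eapply substS; eauto.
    + change (Cst (K := LPC Srt) cType) with (subst_rec N n (Cst (K := LPC Srt) cType)).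
      apply conv_subst1; auto. apply hdsubst.
  - simpl. apply fs_eps.
    change (Pi (Cst (K := LPC Srt) (cU s)) (Cst cType)) with (subst_rec N n (Pi (Cst (K := LPC Srt) (cU s)) (Cst cType))).
    apply conv_subst1; auto. apply hdsubst.
  - simpl. apply fs_lam with (A0 := subst_rec N n A0) (K' := subst_rec N (S n) K').
    + change (Pi (subst_rec N n A0) (subst_rec N (S n) K')) with (subst_rec N n (Pi A0 K')).
      apply conv_subst1; auto. apply hdsubst.
    + apply conv_subst1; auto. apply hdsubst.
    + destruct H1 as (s & H1). exists s. rewrite Tr_subst by auto.
      change (Cst s) with (subst_rec (Tr N) n (Cst (K := option Srt) s)). eapply substS; eauto.
    + rewrite Tr_subst by auto. eapply IHFamS; eauto. constructor; auto.
Qed.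

Lemma isEps_obj : forall (X : tm), lvl X = Some LObj -> isEps X = false.
Proof. intros. destruct X as [c| | | | ]; auto. destruct c; auto. discriminate. Qed.

Definition Trk (t : tm) : tmS := Tr (KN t).
Definition TC (G : list tm) : list tmS := map Trk G.

Lemma Tr_conv_KN : forall A B, conv A B -> convS (Trk A) (Trk B).
Proof. intros. unfold Trk. apply (Tr_conv Ax Rl). eapply conv_trans. apply (KN_conv Ax Rl).
  eapply conv_trans. eauto. apply conv_sym, (KN_conv Ax Rl). Qed.

End Main.

Section Main2.
Context {Srt : Type}.
Variables (Ax : Srt -> Srt -> Prop) (Rl : Srt -> Srt -> Srt -> Prop).
Notation tm := (term (LPC Srt)).
Notation tmS := (term (option Srt)).
Notation hd := (LP_hd Ax Rl).
Notation conv := (conv (LPC Srt) hd).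
Notation tS := (typStar Ax Rl).
Notation wS := (wfStar Ax Rl).

Definition Pm (G : list tm) (M T : tm) : Prop := Inv G ->
  (lvl M = Some LObj -> tS (TC G) (Trk M) (Trk T)) /\
  (lvl M = Some LTF -> FamS Ax Rl (TC G) (KN M) T) /\
  (forall A B, M = Pi A B -> lvl M = Some LKd -> exists s, tS (TC G) (Trk A) (Cst s)).

Lemma Trk_pi : forall (A B : tm), Trk (Pi A B) = Pi (Trk A) (Trk B).
Proof. reflexivity. Qed.

Lemma main_lemma : forall G M T, Defs.typ (LPC Srt) LP_isSort LP_ax LP_rl (LP_sig Ax Rl) hd G M T -> Pm G M T.
Proof.
  apply (typ_mind (LPC Srt) LP_isSort LP_ax LP_rl (LP_sig Ax Rl) hd Pm (fun G => Inv G -> wS (TC G))).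
  -
    intros G s1 s2 Hwf IHwf Hax HI. destruct Hax as [-> ->].
    split; [|split]; intros; simpl in *; discriminate.
  -
    intros G c T Hwf IHwf Hsig HI. pose proof (IHwf HI) as WS.
    destruct c; simpl in Hsig; try contradiction.
    + subst. split; [|split]; intros; simpl in *; try discriminate.
      apply fs_ty; [|apply conv_refl]. apply sort_typ; auto.
    + subst. split; [|split]; intros; simpl in *; try discriminate.
      apply fs_eps. apply conv_refl.
    + destruct Hsig as (s2 & Hax & ->). split; [|split]; intros; simpl in *; try discriminate.
      unfold Trk. simpl. apply t_sort; auto.
    + destruct Hsig as (Hr & ->). split; [|split]; intros; simpl in *; try discriminate.
      unfold Trk. simpl. apply phiPi_typ; auto.
  -
    intros G n A Hwf IHwf Hnth HI. split; [|split]; intros; simpl in *; try discriminate.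
    unfold Trk. simpl. unfold lift. rewrite KN_lift, Tr_lift.
    apply t_var. apply IHwf; auto. unfold TC. rewrite nth_error_map, Hnth. reflexivity.
  -
    intros G A B s1 s2 s3 Hrl HA IHA HB IHB HI.
    assert (LA : lvl A = Some LTF).
    { destruct Hrl as [(-> & _)|(-> & _)];
      destruct (classify Ax Rl _ _ _ HA HI) as [(_ & E)|[(E & _)|(_ & E)]]; simpl in E; try discriminate; auto. }
    destruct (IHA HI) as (_ & FA & _). specialize (FA LA).
    assert (FA' : exists sA, tS (TC G) (Trk A) (Cst sA)).
    { destruct Hrl as [(-> & _)|(-> & _)]; apply FamS_type in FA; auto. }
    destruct FA' as (sA & HsA).
    pose proof (Inv_cons _ _ LA HI) as HI'.
    destruct Hrl as [(-> & -> & ->)|(-> & -> & ->)].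
    + assert (LB : lvl B = Some LTF).
      { destruct (classify Ax Rl _ _ _ HB HI') as [(_ & E)|[(E & _)|(_ & E)]]; simpl in E; try discriminate; auto. }
      destruct (IHB HI') as (_ & FB & _). specialize (FB LB). apply FamS_type in FB.
      destruct FB as (sB & HsB).
      split; [|split]; intros; simpl in *; rewrite LA, LB in *; try discriminate.
      apply fs_ty; [|apply conv_refl].
      destruct (rl_total Rl sA sB) as (r & Hr). exists r. simpl. eapply t_pi; eauto.
    + assert (LB : lvl B = Some LKd).
      { destruct (classify Ax Rl _ _ _ HB HI') as [(_ & E)|[(_ & E)|(E & _)]]; simpl in E; try discriminate; auto. }
      split; [|split]; intros; simpl in *; rewrite ?LA, ?LB in *; try discriminate.
      injection H; intros; subst. eauto.
  -
    intros G A M0 B s His HM IHM HP IHP HI.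
    destruct (classify Ax Rl _ _ _ HP HI) as [(E & _)|[(E & Es)|(E & Es)]];
      apply lvl_pi_inv in E; destruct E as [(E0 & LA & LB)|(E0 & LA & LB)]; try discriminate.
    +
      assert (s = cType) by (destruct His as [->| ->]; simpl in Es; auto; discriminate). subst s.
      pose proof (Inv_cons _ _ LA HI) as HI'.
      destruct (classify Ax Rl _ _ _ HM HI') as [(LM & _)|[(LM & E)|(LM & E)]]; try congruence; try (subst; simpl in *; discriminate).
      split; [|split]; intros; simpl in *; rewrite ?LA, ?LM in *; try discriminate.
      destruct (IHP HI) as (_ & FP & _). assert (LP : lvl (Pi A B) = Some LTF) by (simpl; rewrite LA, LB; auto).
      apply FP in LP. apply FamS_type in LP. destruct LP as (sP & HsP).
      destruct (IHM HI') as (OM & _ & _). specialize (OM LM).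
      unfold Trk. simpl. eapply t_lam; [exact I | exact OM | exact HsP].
    +
      subst. pose proof (Inv_cons _ _ LA HI) as HI'.
      destruct (classify Ax Rl _ _ _ HM HI') as [(LM & E)|[(LM & E)|(LM & E)]]; try congruence.
      2:{ subst B. simpl in LB. discriminate. }
      split; [|split]; intros; simpl in *; rewrite ?LA, ?LM in *; try discriminate.
      destruct (IHP HI) as (_ & _ & KP).
      destruct (KP A B eq_refl) as (sA & HsA). simpl. rewrite LA, LB; auto.
      destruct (IHM HI') as (_ & FM & _). specialize (FM LM).
      eapply fs_lam with (A0 := A) (K' := B); [apply conv_refl | apply conv_sym, KN_conv | eauto | exact FM].
  -
    intros G M N A B HM IHM HN IHN HI.
    destruct (IHM HI) as (OM & FM & _). destruct (IHN HI) as (ON & _ & _).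
    split; [|split]; intros; try discriminate.
    + apply lvl_app_inv in H. destruct H as [(_ & LM & LN)|(E & _)]; try discriminate.
      specialize (OM LM). specialize (ON LN). rewrite Trk_pi in OM.
      pose proof (t_app _ _ _ _ _ _ _ _ _ _ _ OM ON) as H.
      unfold Trk. change (KN (App M N)) with (kapp (KN M) (KN N)).
      rewrite kapp_obj by (apply KN_lvl; auto).
      rewrite Tr_app_nE by (apply isEps_obj; apply KN_lvl; auto).
      unfold subst in *. rewrite KN_subst by auto. rewrite Tr_subst by (apply isEps_obj; apply KN_lvl; auto).
      exact H.
    + apply lvl_app_inv in H. destruct H as [(E & _)|(_ & LM & LN)]; try discriminate.
      specialize (FM LM). specialize (ON LN).
      assert (WS : wS (TC G)) by (eapply typS_wf; eauto).
      change (KN (App M N)) with (kapp (KN M) (KN N)). inversion FM; subst.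
      * exfalso. eapply conv_cst_pi. apply conv_sym; eauto.
      * match goal with Hc : conv (Pi A B) (Pi _ _) |- _ => destruct (conv_pi_inv _ _ _ _ _ _ Hc) as (HAu & HBt) end.
        simpl kapp. apply fs_ty.

        -- destruct (sort_typ Ax Rl _ WS s) as (σ & Hσ). exists (Some s). simpl.
           eapply t_conv; [exact ON | exact I | exact Hσ | ].
           apply (Tr_conv_KN Ax Rl _ _ HAu).
        -- change (Cst (K := LPC Srt) cType) with (subst N (Cst (K := LPC Srt) cType)).
           apply conv_subst1; auto. apply hdsubst.
      * match goal with Hc : conv (Pi A B) (Pi _ _) |- _ => destruct (conv_pi_inv _ _ _ _ _ _ Hc) as (HA0 & HBK) end.
        match goal with |- context [kapp (Lam ?A1 ?F1) (KN N)] => rename A1 into A1'; rename F1 into F' end.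
        match goal with He : Lam A1' F' = KN M |- _ => rename He into HeM end.
        assert (LF : lvl F' = Some LTF).
        { pose proof (KN_lvl _ _ LM) as E. rewrite <- HeM in E. apply lvl_lam_inv in E.
          destruct E as [(E & _)|(_ & _ & E)]; auto; discriminate. }
        unfold kapp. rewrite LF.
        match goal with Hs : exists _, tS (TC G) (Tr A1') (Cst _) |- _ => destruct Hs as (sA1 & HsA1) end.
        match goal with Hc : conv ?A0 A1' |- _ => rename Hc into HA01 end.
        assert (HN1 : tS (TC G) (Tr (KN N)) (Tr A1')).
        { eapply t_conv; [exact ON | exact I | exact HsA1 | ].
          apply (Tr_conv Ax Rl). eapply conv_trans. apply KN_conv. eapply conv_trans. exact HA0. exact HA01. }
        match goal with HF : FamS _ _ (Tr A1' :: TC G) F' _ |- _ =>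
          pose proof (FamS_subst Ax Rl _ _ _ HF _ _ _ _ _ HN1 (sub_O _ _ _)) as HF2 end.
        eapply FamS_conv. apply HF2. apply isEps_obj. apply KN_lvl; auto.
        apply (conv_subst _ (hd_lift Ax Rl) (hd_subst Ax Rl)). apply conv_sym; auto. apply KN_conv.
  -
    intros G M A B s HM IHM His HB IHB Hc HI.
    destruct (IHM HI) as (OM & FM & KM).
    split; [|split]; intros.
    + assert (HMB : typLP Ax Rl G M B) by (eapply t_conv; eauto).
      destruct (classify Ax Rl _ _ _ HMB HI) as [(_ & LB)|[(E & _)|(E & _)]]; try congruence.
      assert (s = cType).
      { destruct (classify Ax Rl _ _ _ HB HI) as [(E & _)|[(_ & E)|(E & _)]]; try congruence.
        destruct His as [->| ->]; simpl in E; auto; discriminate. }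
      subst s. destruct (IHB HI) as (_ & FB & _). specialize (FB LB). apply FamS_type in FB.
      destruct FB as (sB & HsB).
      eapply t_conv; [exact (OM H) | exact I | exact HsB | ]. apply (Tr_conv_KN Ax Rl); auto.
    + eapply FamS_conv; eauto.
    + eapply KM; eauto.
  - intros. apply wf_nil.
  - intros G A s His HA IHA HI.
    assert (LA : lvl A = Some LTF) by (apply (HI 0); reflexivity).
    pose proof (Inv_tail _ _ HI) as HI'.
    assert (s = cType).
    { destruct (classify Ax Rl _ _ _ HA HI') as [(_ & E)|[(_ & E)|(E & _)]]; try congruence.
      destruct His as [->| ->]; simpl in E; auto; discriminate.
      destruct His as [->| ->]; simpl in E; auto; discriminate. }
    subst s. destruct (IHA HI') as (_ & FA & _). specialize (FA LA). apply FamS_type in FA.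
    destruct FA as (sA & HsA). eapply wf_cons; [exact I | exact HsA].
Qed.

End Main2.

Section Final.
Context {Srt : Type}.
Variables (Ax : Srt -> Srt -> Prop) (Rl : Srt -> Srt -> Srt -> Prop).
Notation tm := (term (LPC Srt)).
Notation tmS := (term (option Srt)).
Notation hd := (LP_hd Ax Rl).
Notation conv := (conv (LPC Srt) hd).
Notation tS := (typStar Ax Rl).
Notation wS := (wfStar Ax Rl).
Notation typ := (typLP Ax Rl).

Lemma gen_cstLP : forall G c T, typ G (Cst c) T ->
  (exists s2, LP_ax c s2 /\ conv (Cst s2) T) \/ (exists T0, LP_sig Ax Rl c T0 /\ conv T0 T).
Proof. intros. eapply gen_cst; eauto. Qed.
Lemma gen_appLP : forall G u v T, typ G (App u v) T ->
  exists A B, typ G u (Pi A B) /\ typ G v A /\ conv (subst v B) T.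
Proof. intros. eapply gen_app; eauto. Qed.
Lemma gen_lamLP : forall G A M T, typ G (Lam A M) T ->
  exists B s, typ (A :: G) M B /\ typ G (Pi A B) (Cst s) /\ conv (Pi A B) T.
Proof. intros. eapply gen_lam; eauto. Qed.
Lemma gen_piLP : forall G A B T, typ G (Pi A B) T -> exists s1 s2 s3, LP_rl s1 s2 s3 /\
  typ G A (Cst s1) /\ typ (A :: G) B (Cst s2) /\ conv (Cst s3) T.
Proof. intros. eapply gen_pi; eauto. Qed.

Lemma sig_closed_lift : forall c T k n, LP_sig Ax Rl c T -> lift_rec k n T = T.
Proof. intros. destruct c; simpl in H; try contradiction.
  - subst; reflexivity.
  - subst; reflexivity.
  - destruct H as (? & ? & ->); reflexivity.
  - destruct H as (? & ->); reflexivity. Qed.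
Lemma sig_closed_subst : forall c T N k, LP_sig Ax Rl c T -> subst_rec N k T = T.
Proof. intros. destruct c; simpl in H; try contradiction.
  - subst; reflexivity.
  - subst; reflexivity.
  - destruct H as (? & ? & ->); reflexivity.
  - destruct H as (? & ->); reflexivity. Qed.

Lemma substLP : forall G A M B N, typ (A :: G) M B -> typ G N A -> typ G (subst N M) (subst N B).
Proof. intros. eapply substitution; eauto.
  - apply hd_lift. - apply hd_subst. - apply sig_closed_lift. - apply sig_closed_subst.
  - intros s1 s2 s3 [(-> & _)|(-> & _)]; left; auto. Qed.

Lemma kd_not_type : forall X, lvl X = Some LKd -> forall G, ~ typ G X (Cst cType).
Proof. induction X as [c|i|X1 IH1 X2 IH2|X1 IH1 X2 IH2|X1 IH1 X2 IH2]; intros HX G Ht; simpl in HX.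
  - destruct c; try discriminate.
    destruct (gen_cstLP _ _ _ Ht) as [(s2 & (_ & ->) & Hc)|(T0 & HT0 & _)].
    + apply conv_cst_inv in Hc. discriminate.
    + simpl in HT0. contradiction.
  - discriminate.
  - destruct (lvl X1) as [[]|]; destruct (lvl X2) as [[]|]; discriminate.
  - destruct (lvl X1) as [[]|]; destruct (lvl X2) as [[]|]; discriminate.
  - destruct (gen_piLP _ _ _ _ Ht) as (s1 & s2 & s3 & Hr & _ & H2 & Hc).
    apply conv_cst_inv in Hc. subst.
    destruct Hr as [(_ & -> & _)|(_ & _ & E)]; [|discriminate].
    destruct (lvl X1) as [[]|]; destruct (lvl X2) as [[]|] eqn:E2; try discriminate.
    eapply IH2; eauto.
Qed.

Lemma wf_entry : forall G n A, wfLP Ax Rl G -> nth_error G n = Some A ->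
  exists s, LP_isSort s /\ typ (skipn (S n) G) A (Cst s).
Proof. induction G; intros [|n] A0 H E; simpl in E; try discriminate.
  - injection E; intros; subst. inversion H; subst. simpl. eauto.
  - inversion H; subst. simpl. apply (IHG n A0); auto. eapply typ_wf; eauto. Qed.

Lemma Inv_of_wf : forall G, wfLP Ax Rl G ->
  (forall n A, nth_error G n = Some A -> lvl A <> Some LKd) -> Inv G.
Proof. induction G; intros H Hn.
  - intros n A E. destruct n; discriminate.
  - inversion H; subst.
    assert (HI : Inv G).
    { apply IHG. eapply typ_wf; eauto. intros n A0 E. apply (Hn (S n)); auto. }
    apply Inv_cons; auto.
    destruct (classify Ax Rl _ _ _ H3 HI) as [(_ & E)|[(E & _)|(E & _)]].
    + destruct H2 as [->| ->]; simpl in E; discriminate.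
    + auto.
    + exfalso. apply (Hn 0 a); auto.
Qed.

Lemma Inv_skipn : forall (G : list tm) k, Inv G -> Inv (skipn k G).
Proof. induction G; intros [|k] H; simpl; auto.
  - apply IHG. eapply Inv_tail; eauto. Qed.

Lemma nkr_appl : forall G u v, NoKindRedex Ax Rl G (App u v) -> NoKindRedex Ax Rl G u.
Proof. intros G u v H (D & B & C & P & T & Hs & Ht & Hk). apply H. exists D, B, C, P, T.
  split; auto. apply sa_appl; auto. Qed.
Lemma nkr_appr : forall G u v, NoKindRedex Ax Rl G (App u v) -> NoKindRedex Ax Rl G v.
Proof. intros G u v H (D & B & C & P & T & Hs & Ht & Hk). apply H. exists D, B, C, P, T.
  split; auto. apply sa_appr; auto. Qed.
Lemma nkr_laml : forall G u v, NoKindRedex Ax Rl G (Lam u v) -> NoKindRedex Ax Rl G u.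
Proof. intros G u v H (D & B & C & P & T & Hs & Ht & Hk). apply H. exists D, B, C, P, T.
  split; auto. apply sa_laml; auto. Qed.
Lemma nkr_lamr : forall G u v, NoKindRedex Ax Rl G (Lam u v) -> NoKindRedex Ax Rl (u :: G) v.
Proof. intros G u v H (D & B & C & P & T & Hs & Ht & Hk). apply H. exists D, B, C, P, T.
  split; auto. apply sa_lamr; auto. Qed.
Lemma nkr_pil : forall G u v, NoKindRedex Ax Rl G (Pi u v) -> NoKindRedex Ax Rl G u.
Proof. intros G u v H (D & B & C & P & T & Hs & Ht & Hk). apply H. exists D, B, C, P, T.
  split; auto. apply sa_pil; auto. Qed.
Lemma nkr_pir : forall G u v, NoKindRedex Ax Rl G (Pi u v) -> NoKindRedex Ax Rl (u :: G) v.
Proof. intros G u v H (D & B & C & P & T & Hs & Ht & Hk). apply H. exists D, B, C, P, T.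
  split; auto. apply sa_pir; auto. Qed.

Lemma redex_kind : forall D B C P T0, Inv D -> typ D (App (Lam B C) P) T0 -> lvl C = Some LTF ->
  exists T', typ D (App (Lam B C) P) T' /\ typ D T' (Cst cKind).
Proof. intros D B C P T0 HI Ht LC.
  destruct (gen_appLP _ _ _ _ Ht) as (X & Y & HL & HP & _).
  destruct (gen_lamLP _ _ _ _ HL) as (C' & s & HC & HPi & Hc).
  destruct (conv_pi_inv _ _ _ _ _ _ Hc) as (HBX & _).
  assert (LB : lvl B = Some LTF).
  { destruct (classify Ax Rl _ _ _ HPi HI) as [(E & _)|[(E & _)|(E & _)]];
    apply lvl_pi_inv in E; destruct E as [(_ & ? & _)|(_ & ? & _)]; auto. }
  pose proof (Inv_cons _ _ LB HI) as HI'.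
  assert (LC' : lvl C' = Some LKd).
  { destruct (classify Ax Rl _ _ _ HC HI') as [(E & _)|[(_ & E)|(E & _)]]; congruence. }
  assert (Hs : s = cKind).
  { destruct (classify Ax Rl _ _ _ HPi HI) as [(E & _)|[(E & _)|(_ & E)]].
    - simpl in E. rewrite LB, LC' in E. discriminate.
    - simpl in E. rewrite LB, LC' in E. discriminate.
    - injection E; auto. }
  subst s.
  destruct (gen_piLP _ _ _ _ HPi) as (s1 & s2 & s3 & Hr & HB1 & HC2 & Hc3).
  apply conv_cst_inv in Hc3. subst s3.
  destruct Hr as [(_ & _ & E)|(-> & -> & _)]; [discriminate|].
  assert (HPB : typ D P B).
  { eapply t_conv; [exact HP | left; auto | exact HB1 | apply conv_sym; auto]. }
  exists (subst P C'). split.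
  - eapply t_app; [|exact HPB]. eapply t_lam; [right; auto | exact HC | exact HPi].
  - exact (substLP _ _ _ _ _ HC2 HPB).
Qed.

Lemma fam_head : forall u G T X Y, Inv G -> typ G u T -> lvl u = Some LTF -> NoKindRedex Ax Rl G u ->
  conv T (Pi X Y) -> (exists s, u = Cst (cEps s)) \/ (exists B C, u = Lam B C).
Proof. induction u as [c|i|u1 IH1 u2 IH2|u1 IH1 u2 IH2|u1 IH1 u2 IH2]; intros G T X Y HI Ht Lu Hn Hc.
  - destruct c; simpl in Lu; try discriminate; eauto.
    exfalso. destruct (gen_cstLP _ _ _ Ht) as [(s2 & (E & _) & _)|(T0 & HT0 & Hc0)]; try discriminate.
    simpl in HT0. subst. apply (conv_cst_pi Ax Rl cType X Y). eapply conv_trans; eauto.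
  - discriminate.
  - exfalso. apply lvl_app_inv in Lu. destruct Lu as [(E & _)|(_ & L1 & L2)]; try discriminate.
    destruct (gen_appLP _ _ _ _ Ht) as (X' & Y' & H1 & H2 & H3).
    destruct (IH1 _ _ _ _ HI H1 L1 (nkr_appl _ _ _ Hn) (conv_refl _ _)) as [(s & ->)|(B & C & ->)].
    + destruct (gen_cstLP _ _ _ H1) as [(s2 & (E & _) & _)|(T0 & HT0 & Hc0)]; try discriminate.
      simpl in HT0. subst. destruct (conv_pi_inv _ _ _ _ _ _ Hc0) as (_ & HY).
      assert (conv (Cst cType) (Pi X Y)).
      { eapply conv_trans; [|exact Hc]. eapply conv_trans; [|exact H3].
        change (Cst (K := LPC Srt) cType) with (subst u2 (Cst (K := LPC Srt) cType)).
        apply conv_subst1. apply hd_subst. exact HY. }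
      eapply conv_cst_pi; eauto.
    + apply Hn. simpl in L1. destruct (lvl B) as [[]|]; destruct (lvl C) as [[]|] eqn:EC; try discriminate.
      destruct (redex_kind _ _ _ _ _ HI Ht EC) as (T' & HT' & HK).
      exists G, B, C, u2, T'. split; auto. apply sa_here.
  - eauto.
  - exfalso. destruct (gen_piLP _ _ _ _ Ht) as (s1 & s2 & s3 & _ & _ & _ & Hc3).
    eapply conv_cst_pi. eapply conv_trans; eauto.
Qed.

Lemma lvl_TF_of_type : forall G M T, Inv G -> typ G M T -> conv T (Cst cType) -> lvl M = Some LTF.
Proof. intros. destruct (classify Ax Rl _ _ _ H0 H) as [(_ & E)|[(E & _)|(_ & E)]]; auto.
  - exfalso. pose proof (lvl_conv _ _ _ _ _ _ H1 E (eq_refl : lvl (Cst (K := LPC Srt) cType) = Some LKd)).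
    discriminate.
  - subst. apply conv_cst_inv in H1. discriminate. Qed.

Lemma grammar : forall M G T, Inv G -> typ G M T -> NoKindRedex Ax Rl G M ->
  (lvl M = Some LObj -> Om M) /\ (conv T (Cst cType) -> Tm M).
Proof. induction M as [c|i|u IH1 v IH2|B IH1 C IH2|A IH1 B IH2]; intros G T HI Ht Hn; split; intros HL.
  - destruct c; simpl in HL; try discriminate; constructor.
  - pose proof (lvl_TF_of_type _ _ _ HI Ht HL) as E. destruct c; simpl in E; try discriminate.
    + constructor.
    + exfalso. destruct (gen_cstLP _ _ _ Ht) as [(s2 & (E' & _) & _)|(T0 & HT0 & Hc0)]; try discriminate.
      simpl in HT0. subst. eapply conv_cst_pi. apply conv_sym. eapply conv_trans; eauto.
  - constructor.
  - pose proof (lvl_TF_of_type _ _ _ HI Ht HL) as E. discriminate.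
  - apply lvl_app_inv in HL. destruct HL as [(_ & L1 & L2)|(E & _)]; try discriminate.
    destruct (gen_appLP _ _ _ _ Ht) as (X & Y & H1 & H2 & _).
    constructor.
    + eapply (IH1 _ _ HI H1); eauto using nkr_appl.
    + eapply (IH2 _ _ HI H2); eauto using nkr_appr.
  - pose proof (lvl_TF_of_type _ _ _ HI Ht HL) as E.
    apply lvl_app_inv in E. destruct E as [(E & _)|(_ & L1 & L2)]; try discriminate.
    destruct (gen_appLP _ _ _ _ Ht) as (X & Y & H1 & H2 & _).
    destruct (fam_head _ _ _ _ _ HI H1 L1 (nkr_appl _ _ _ Hn) (conv_refl _ _)) as [(s & ->)|(B & C & ->)].
    + constructor. eapply (IH2 _ _ HI H2); eauto using nkr_appr.
    + exfalso. apply Hn. simpl in L1. destruct (lvl B) as [[]|]; destruct (lvl C) as [[]|] eqn:EC; try discriminate.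
      destruct (redex_kind _ _ _ _ _ HI Ht EC) as (T' & HT' & HK).
      exists G, B, C, v, T'. split; auto. apply sa_here.
  - apply lvl_lam_inv in HL. destruct HL as [(_ & LB & LC)|(E & _)]; try discriminate.
    destruct (gen_lamLP _ _ _ _ Ht) as (C' & s & HC & HPi & _).
    destruct (gen_piLP _ _ _ _ HPi) as (s1 & s2 & s3 & Hr & HB1 & _ & _).
    assert (s1 = cType) by (destruct Hr as [(-> & _)|(-> & _)]; auto). subst s1.
    constructor.
    + eapply (IH1 _ _ HI HB1); eauto using nkr_laml. apply conv_refl.
    + eapply (IH2 _ _ (Inv_cons _ _ LB HI) HC); eauto using nkr_lamr.
  - exfalso. destruct (gen_lamLP _ _ _ _ Ht) as (C' & s & _ & _ & Hc).
    eapply conv_cst_pi. apply conv_sym. eapply conv_trans; eauto.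
  - simpl in HL. destruct (lvl A) as [[]|]; destruct (lvl B) as [[]|]; discriminate.
  - destruct (gen_piLP _ _ _ _ Ht) as (s1 & s2 & s3 & Hr & HA1 & HB2 & Hc3).
    assert (s3 = cType) by (apply (conv_cst_inv Ax Rl); eapply conv_trans; eauto). subst s3.
    destruct Hr as [(-> & -> & _)|(_ & _ & E)]; [|discriminate].
    assert (LA : lvl A = Some LTF) by (eapply lvl_TF_of_type; eauto; apply conv_refl).
    constructor.
    + eapply (IH1 _ _ HI HA1); eauto using nkr_pil. apply conv_refl.
    + eapply (IH2 _ _ (Inv_cons _ _ LA HI) HB2); eauto using nkr_pir. apply conv_refl.
Qed.

End Final.

Section Fin.
Context {Srt : Type}.
Variables (Ax : Srt -> Srt -> Prop) (Rl : Srt -> Srt -> Srt -> Prop).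
Notation tm := (term (LPC Srt)).
Notation typ := (typLP Ax Rl).

Lemma wf_main : forall G, wfLP Ax Rl G -> Inv G -> wfStar Ax Rl (TC G).
Proof. intros G H HI. inversion H; subst.
  - apply wf_nil.
  - assert (LA : lvl A = Some LTF) by (apply (HI 0); reflexivity).
    pose proof (Inv_tail _ _ HI) as HI'.
    assert (s = cType).
    { destruct (classify Ax Rl _ _ _ H1 HI') as [(_ & E)|[(_ & E)|(E & _)]]; try congruence;
      destruct H0 as [->| ->]; simpl in E; auto; discriminate. }
    subst s. destruct (main_lemma Ax Rl _ _ _ H1 HI') as (_ & FA & _). specialize (FA LA).
    apply FamS_type in FA. destruct FA as (sA & HsA). eapply wf_cons; [exact I | exact HsA].
Qed.

Lemma ctx_facts : forall (G : list tm), (forall n A, nth_error G n = Some A -> Tm A) ->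
  TC G = map Tr G /\ psi_ctx G = Some (map Tr G).
Proof. induction G; intros H; simpl; auto.
  assert (Ta : Tm a) by (apply (H 0); reflexivity).
  destruct IHG as (E1 & E2). intros n A E; apply (H (S n)); auto.
  split.
  - unfold TC, Trk in *. simpl. rewrite (proj2 (OmTm_KN) a Ta). f_equal. auto.
  - rewrite (proj2 OmTm_phi a Ta), E2. auto.
Qed.

Lemma good_ctx : forall G, wfLP Ax Rl G -> object_ctx Ax Rl G ->
  (forall n T, nth_error G n = Some T -> LPminus Ax Rl (skipn (S n) G) T) ->
  Inv G /\ (forall n A, nth_error G n = Some A -> Tm A).
Proof. intros G Hwf Hobj HG.
  assert (HI : Inv G).
  { apply (Inv_of_wf Ax Rl); auto. intros n A E LA. apply (kd_not_type Ax Rl (lift (S n) A) ltac:(unfold lift; rewrite lvl_lift; auto) G). apply Hobj; auto. }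
  split; auto. intros n A E.
  destruct (wf_entry Ax Rl _ _ _ Hwf E) as (s & Hs & Ht).
  pose proof (Inv_skipn _ (S n) HI) as HI'.
  assert (LA : lvl A = Some LTF) by (eapply HI; eauto).
  assert (s = cType).
  { destruct (classify Ax Rl _ _ _ Ht HI') as [(E1 & _)|[(_ & E1)|(E1 & _)]]; try congruence;
    destruct Hs as [->| ->]; simpl in E1; auto; discriminate. }
  subst s. destruct (HG n A E) as (_ & Hn).
  apply (proj2 (grammar Ax Rl A _ _ HI' Ht Hn)). apply conv_refl.
Qed.

End Fin.

Theorem lemma5p14 (Srt : Type) (Ax : Srt -> Srt -> Prop)
  (Rl : Srt -> Srt -> Srt -> Prop)
  (HF : functional_spec Ax Rl)
  (G : list (term (LPC Srt))) (M A : term (LPC Srt))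
  (Hobj : object_ctx Ax Rl G)
  (HG : forall n T, nth_error G n = Some T -> LPminus Ax Rl (skipn (S n) G) T)
  (HM : NoKindRedex Ax Rl G M) (HA : NoKindRedex Ax Rl G A) :
  (wfLP Ax Rl G ->
     exists G', psi_ctx G = Some G' /\ wfStar Ax Rl G') /\
  (typLP Ax Rl G M A -> typLP Ax Rl G A (Cst cType) ->
     exists G' M' A', psi_ctx G = Some G' /\ phi M = Some M' /\
       psi A = Some A' /\ typStar Ax Rl G' M' A') /\
  (typLP Ax Rl G A (Cst cType) ->
     exists G' A' (s : option Srt), psi_ctx G = Some G' /\
       psi A = Some A' /\ typStar Ax Rl G' A' (Cst s)).
Proof.
  split; [|split].
  - intros Hwf. destruct (good_ctx Ax Rl G Hwf Hobj HG) as (HI & HT).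
    destruct (ctx_facts G HT) as (E1 & E2).
    exists (map Tr G). split; auto. rewrite <- E1. apply wf_main; auto.
  - intros HMA HAT. assert (Hwf : wfLP Ax Rl G) by (eapply typ_wf; eauto).
    destruct (good_ctx Ax Rl G Hwf Hobj HG) as (HI & HT).
    destruct (ctx_facts G HT) as (E1 & E2).
    assert (LA : lvl A = Some LTF) by (eapply lvl_TF_of_type; eauto; apply conv_refl).
    assert (LM : lvl M = Some LObj).
    { destruct (classify Ax Rl _ _ _ HMA HI) as [(E & _)|[(_ & E)|(_ & E)]]; try congruence.
      subst. discriminate. }
    assert (OM : Om M) by (apply (proj1 (grammar Ax Rl M _ _ HI HMA HM)); auto).
    assert (TA : Tm A) by (apply (proj2 (grammar Ax Rl A _ _ HI HAT HA)); apply conv_refl).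
    destruct (main_lemma Ax Rl _ _ _ HMA HI) as (HO & _ & _). specialize (HO LM).
    exists (map Tr G), (Tr M), (Tr A). repeat split; auto.
    + apply (proj1 OmTm_phi); auto.
    + apply (proj2 OmTm_phi); auto.
    + rewrite <- E1. unfold Trk in HO. rewrite (proj1 OmTm_KN M OM), (proj2 OmTm_KN A TA) in HO. exact HO.
  - intros HAT. assert (Hwf : wfLP Ax Rl G) by (eapply typ_wf; eauto).
    destruct (good_ctx Ax Rl G Hwf Hobj HG) as (HI & HT).
    destruct (ctx_facts G HT) as (E1 & E2).
    assert (LA : lvl A = Some LTF) by (eapply lvl_TF_of_type; eauto; apply conv_refl).
    assert (TA : Tm A) by (apply (proj2 (grammar Ax Rl A _ _ HI HAT HA)); apply conv_refl).
    destruct (main_lemma Ax Rl _ _ _ HAT HI) as (_ & FA & _). specialize (FA LA).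
    apply FamS_type in FA. destruct FA as (s & Hs).
    exists (map Tr G), (Tr A), s. repeat split; auto.
    + apply (proj2 OmTm_phi); auto.
    + rewrite <- E1. rewrite (proj2 OmTm_KN A TA) in Hs. exact Hs.
Qed.
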